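(* Let $k\ge3$ and let $\boldsymbol x^*$ be a pure Nash equilibrium of $\mathcal L(n,S_k)$. Then: (a) some player is located at the center $v_0$; (b) for every $x\in S_k\setminus\{v_0\}$, $\operatorname{card}\{i:x_i^*=x\}\le2$; (c) $\operatorname{card}\{i:x_i^*=v_0\}\le k$; (d) if some player is located in $S_k\setminus\{v_0\}$, then for every $j\in\{1,\dots,k\}$ the edge $[v_0,v_j]$ contains, outside $v_0$, at least two players, and the two players on $[v_0,v_j]\setminus\{v_0\}$ that are farthest from $v_0$ are located at the same point.
   Context: The star $S_k$ is the network with vertices $v_0,v_1,\dots,v_k$ and edges $[v_0,v_j]$, $j=1,\dots,k$, each of length $1$. It carries length measure $\lambda$ and shortest-path distance $d$. Location game $\mathcal L(n,S_k)$: $n$ players each choose a point of $S_k$. Consumers are distributed according to $\lambda$, and each shops at a closest occupied location. Consumers equidistant from several closest occupied locations are split equally among those locations, and the share of a location is split equally among the players located there. Payoff is the mass of consumers attracted. Nash equilibria are pure. *)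

(* Defs.v *)
From Stdlib Require Import Reals Lra Lia List Arith Bool ClassicalEpsilon.
Import ListNotations.
Open Scope R_scope.
Open Scope bool_scope.

(** Points of the star S_k.  [Center] is v_0; [OnEdge j t] (1 <= j <= k,
    0 < t <= 1) is the point of edge [v_0,v_j] at distance t from v_0
    (so [OnEdge j 1] is v_j). *)
Inductive point : Type :=
| Center : point
| OnEdge : nat -> R -> point.

Definition valid (k : nat) (p : point) : Prop :=
  match p with
  | Center => True
  | OnEdge j t => (1 <= j <= k)%nat /\ 0 < t <= 1
  end.

Definition dist (p q : point) : R :=
  match p, q with
  | Center, Center => 0
  | Center, OnEdge _ t => t
  | OnEdge _ t, Center => t
  | OnEdge j t, OnEdge j' s => if Nat.eqb j j' then Rabs (t - s) else t + s
  end.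

Definition point_eqb (p q : point) : bool :=
  match p, q with
  | Center, Center => true
  | OnEdge j t, OnEdge j' s =>
      Nat.eqb j j' && (if Req_EM_T t s then true else false)
  | _, _ => false
  end.

Definition profile := nat -> point.

Definition update (x : profile) (i : nat) (y : point) : profile :=
  fun m => if Nat.eqb m i then y else x m.

Definition closestb (n : nat) (x : profile) (y : point) (m : nat) : bool :=
  forallb (fun m' => if Rle_dec (dist y (x m)) (dist y (x m')) then true else false)
          (seq 0 n).

Definition card_at (n : nat) (x : profile) (p : point) : nat :=
  length (filter (fun m => point_eqb (x m) p) (seq 0 n)).

(** Number of distinct closest occupied locations to consumer y
    (each location counted once, via its first occupant). *)
Definition n_closest_locs (n : nat) (x : profile) (y : point) : nat :=
  length (filter (fun m => closestb n x y m &&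
                   forallb (fun m' => negb (point_eqb (x m') (x m))) (seq 0 m))
                 (seq 0 n)).

(** Share of consumer y going to player i: split equally among the closest
    locations, then equally among the players at the location. *)
Definition share (n : nat) (x : profile) (i : nat) (y : point) : R :=
  if closestb n x y i
  then / (INR (n_closest_locs n x y) * INR (card_at n x (x i)))
  else 0.

(** Riemann integral over [0,1] (0 if not Riemann integrable). *)
Definition integral01 (f : R -> R) : R :=
  match excluded_middle_informative (inhabited (Riemann_integrable f 0 1)) with
  | left H => RiemannInt (epsilon H (fun _ => True))
  | right _ => 0
  end.

(** Payoff: mass (w.r.t. length measure on S_k) of consumers attracted by
    player i; the center has measure zero. *)
Definition payoff (k n : nat) (x : profile) (i : nat) : R :=
  fold_right Rplus 0
    (map (fun j => integral01 (fun t => share n x i (OnEdge j t))) (seq 1 k)).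

Definition is_NE (k n : nat) (x : profile) : Prop :=
  (forall m, (m < n)%nat -> valid k (x m)) /\
  (forall i, (i < n)%nat -> forall y, valid k y ->
     payoff k n (update x i y) i <= payoff k n x i).

Definition on_edgeb (j : nat) (p : point) : bool :=
  match p with
  | Center => false
  | OnEdge j' _ => Nat.eqb j j'
  end.

Definition card_edge (n : nat) (x : profile) (j : nat) : nat :=
  length (filter (fun m => on_edgeb j (x m)) (seq 0 n)).

(* Main.v *)
Require Import Defs.
From Stdlib Require Import Reals List Arith Lra Lia Classical ClassicalEpsilon Bool.
From Coquelicot Require Import Coquelicot.
Import ListNotations.
Import Defs.
Open Scope R_scope.

Definition avoid (L : list R) (t1 t2 : R) : Prop :=
  forall z, In z L -> z < t1 \/ t2 < z.

Definition goodL (L : list R) (f : R -> R) (a b : R) : Prop :=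
  forall t1 t2, a < t1 -> t1 <= t2 -> t2 < b -> avoid L t1 t2 -> f t1 = f t2.

Definition PC (f : R -> R) : Prop := exists L, goodL L f 0 1.

Lemma goodL_exRInt : forall L f a b, a <= b -> goodL L f a b -> ex_RInt f a b.
Proof.
  induction L as [|z L IH]; intros f a b Hab HL.
  - destruct (Req_dec a b) as [E|E].
    + subst. apply ex_RInt_point.
    + apply (ex_RInt_ext (fun _ => f ((a+b)/2))).
      2: apply ex_RInt_const.
      intros y Hy. rewrite Rmin_left in Hy by lra. rewrite Rmax_right in Hy by lra.
      destruct (Rle_dec y ((a+b)/2)).
      * symmetry. apply HL; try lra. intros z Hz; inversion Hz.
      * apply HL; try lra. intros z Hz; inversion Hz.
  - destruct (Rle_dec z a) as [Hz|Hz].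
    { apply IH; auto. intros t1 t2 H1 H2 H3 Hav. apply HL; auto.
      intros w [<-|Hw]; [lra| auto]. }
    destruct (Rle_dec b z) as [Hz'|Hz'].
    { apply IH; auto. intros t1 t2 H1 H2 H3 Hav. apply HL; auto.
      intros w [<-|Hw]; [lra| auto]. }
    apply ex_RInt_Chasles with z.
    + apply IH; [lra|]. intros t1 t2 H1 H2 H3 Hav. apply HL; auto; try lra.
      intros w [<-|Hw]; [lra| auto].
    + apply IH; [lra|]. intros t1 t2 H1 H2 H3 Hav. apply HL; auto; try lra.
      intros w [<-|Hw]; [lra| auto].
Qed.

Lemma PC_ex : forall f, PC f -> ex_RInt f 0 1.
Proof. intros f [L H]. apply (goodL_exRInt L); auto; lra. Qed.

Lemma integral01_PC : forall f, PC f -> integral01 f = RInt f 0 1.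
Proof.
  intros f H. unfold integral01.
  destruct (excluded_middle_informative _) as [Hi|Hn].
  - symmetry. apply RInt_Reals.
  - exfalso. apply Hn. constructor.
    pose proof (PC_ex f H) as He.
    apply ex_RInt_Reals_0. exact He.
Qed.

Lemma goodL_mono : forall L L' f a b, incl L L' -> goodL L f a b -> goodL L' f a b.
Proof. intros L L' f a b Hi H t1 t2 ? ? ? Hav. apply H; auto.
  intros z Hz. apply Hav. auto. Qed.

Lemma goodL_sub : forall L f a b a' b', a <= a' -> b' <= b -> goodL L f a b -> goodL L f a' b'.
Proof. intros L f a b a' b' ? ? H t1 t2 ? ? ? Hav. apply H; auto; lra. Qed.

Lemma PC_comb : forall f g (h : R -> R -> R), PC f -> PC g -> PC (fun t => h (f t) (g t)).
Proof.
  intros f g h [L1 H1] [L2 H2]. exists (L1 ++ L2).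
  intros t1 t2 ? ? ? Hav.
  rewrite (H1 t1 t2), (H2 t1 t2); auto;
  intros z Hz; apply Hav; apply in_or_app; auto.
Qed.

Lemma PC_const : forall c, PC (fun _ => c).
Proof. intros c. exists nil. intros ? ? ? ? ? ?; reflexivity. Qed.

Definition ind (u v t : R) : R :=
  if Rle_dec u t then if Rlt_dec t v then 1 else 0 else 0.

Lemma PC_ind : forall u v, PC (ind u v).
Proof.
  intros u v. exists [u; v]. intros t1 t2 ? ? ? Hav. unfold ind.
  destruct (Hav u) as [Hu|Hu]; [simpl; auto| |];
  destruct (Hav v) as [Hv|Hv]; try (simpl; auto; fail);
  repeat (destruct Rle_dec); repeat (destruct Rlt_dec); try lra; auto.
Qed.

Lemma PC_exab : forall f a b, PC f -> 0 <= a -> a <= b -> b <= 1 -> ex_RInt f a b.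
Proof. intros f a b [L H] ? ? ?. apply (goodL_exRInt L); auto.
  apply (goodL_sub L f 0 1); auto. Qed.

Lemma RI_le : forall f g, PC f -> PC g -> (forall t, 0 < t < 1 -> f t <= g t) ->
  RInt f 0 1 <= RInt g 0 1.
Proof. intros. apply RInt_le; auto; try lra; apply PC_ex; auto. Qed.

Lemma RI_scal : forall a f, PC f -> RInt (fun t => a * f t) 0 1 = a * RInt f 0 1.
Proof. intros a f Hf.
  pose proof (RInt_scal f 0 1 a (PC_ex f Hf)) as E. unfold scal in E; simpl in E; unfold mult in E; simpl in E.
  exact E. Qed.

Lemma PC_exs : forall a f, PC f -> ex_RInt (fun t => a * f t) 0 1.
Proof. intros. apply (ex_RInt_scal f 0 1 a). apply PC_ex; auto. Qed.

Lemma RI_lin : forall a f g, PC f -> PC g ->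
  RInt (fun t => a * f t + g t) 0 1 = a * RInt f 0 1 + RInt g 0 1.
Proof.
  intros a f g Hf Hg.
  pose proof (RInt_plus (fun t => a * f t) g 0 1 (PC_exs a f Hf) (PC_ex g Hg)) as E.
  unfold plus in E; simpl in E. rewrite E. rewrite RI_scal; auto.
Qed.

Lemma RI_const : forall c : R, RInt (fun _ : R => c) 0 1 = c.
Proof. intros c. rewrite RInt_const. unfold scal; simpl. unfold mult; simpl. ring. Qed.

Lemma RI_piece : forall f a b c, 0 <= a -> a <= b -> b <= 1 ->
  (forall t, a < t < b -> f t = c) -> RInt f a b = (b - a) * c.
Proof.
  intros f a b c ? ? ? H.
  rewrite (RInt_ext f (fun _ => c)).
  - rewrite RInt_const. unfold scal; simpl; unfold mult; simpl; ring.
  - intros t Ht. rewrite Rmin_left in Ht by lra. rewrite Rmax_right in Ht by lra. auto.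
Qed.

Lemma RI_ind : forall u v, 0 <= u -> u <= v -> v <= 1 -> RInt (ind u v) 0 1 = v - u.
Proof.
  intros u v ? ? ?.
  assert (P := PC_ind u v).
  rewrite <- (RInt_Chasles (ind u v) 0 v 1) by (apply PC_exab; auto; lra).
  rewrite <- (RInt_Chasles (ind u v) 0 u v) by (apply PC_exab; auto; lra).
  unfold plus; simpl.
  rewrite (RI_piece _ 0 u 0), (RI_piece _ u v 1), (RI_piece _ v 1 0); try lra;
  intros t Ht; unfold ind; repeat destruct Rle_dec; repeat destruct Rlt_dec; lra.
Qed.

Definition goodG {A : Type} (L : list R) (f : R -> A) : Prop :=
  forall t1 t2, 0 < t1 -> t1 <= t2 -> t2 < 1 -> avoid L t1 t2 -> f t1 = f t2.

Lemma goodG_mono : forall {A} L L' (f : R -> A), incl L L' -> goodG L f -> goodG L' f.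
Proof. intros A L L' f Hi H t1 t2 ? ? ? Hav. apply H; auto.
  intros z Hz. apply Hav. auto. Qed.

Definition rep (f : R -> R) (c : R) : Prop :=
  (forall t, f t = t + c) \/ (forall t, f t = Rabs (t - c)).

Ltac av H z := let h := fresh "hav" in
  assert (h : z < _ \/ _ < z) by (apply H; simpl; tauto); destruct h.

Ltac rabs := repeat match goal with
  | |- context [Rabs ?a] => destruct (Rcase_abs a); [rewrite (Rabs_left a) by lra | rewrite (Rabs_right a) by lra]
  end.

Lemma rep_good : forall f g c d, rep f c -> rep g d ->
  goodG [c; d; (c+d)/2; (c-d)/2; (d-c)/2] (fun t => if Rle_dec (f t) (g t) then true else false).
Proof.
  intros f g c d [Hf|Hf] [Hg|Hg] t1 t2 ? ? ? Hav; rewrite !Hf, !Hg.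
  - destruct (Rle_dec (t1 + c) (t1 + d)); destruct (Rle_dec (t2 + c) (t2 + d)); auto; lra.
  - av Hav d; av Hav ((d-c)/2);
    destruct (Rle_dec (t1 + c) (Rabs (t1 - d))); destruct (Rle_dec (t2 + c) (Rabs (t2 - d))); auto;
    exfalso; revert r n; rabs; lra.
  - av Hav c; av Hav ((c-d)/2);
    destruct (Rle_dec (Rabs (t1 - c)) (t1 + d)); destruct (Rle_dec (Rabs (t2 - c)) (t2 + d)); auto;
    exfalso; revert r n; rabs; lra.
  - av Hav c; av Hav d; av Hav ((c+d)/2);
    destruct (Rle_dec (Rabs (t1 - c)) (Rabs (t1 - d))); destruct (Rle_dec (Rabs (t2 - c)) (Rabs (t2 - d))); auto;
    exfalso; revert r n; rabs; lra.
Qed.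

Definition par (p : point) : R := match p with Center => 0 | OnEdge _ s => s end.

Lemma rep_dist : forall j p, rep (fun t => dist (OnEdge j t) p) (par p).
Proof.
  intros j [|j' s]; unfold rep; simpl.
  - left; intros; ring.
  - destruct (Nat.eqb j j'); [right|left]; auto.
Qed.

Definition cmpb (y p q : point) : bool :=
  if Rle_dec (dist y p) (dist y q) then true else false.

Definition Lcmp (p q : point) : list R :=
  [par p; par q; (par p + par q)/2; (par p - par q)/2; (par q - par p)/2].

Lemma cmp_good : forall j p q, goodG (Lcmp p q) (fun t => cmpb (OnEdge j t) p q).
Proof. intros j p q. unfold cmpb. apply (rep_good (fun t => dist (OnEdge j t) p) (fun t => dist (OnEdge j t) q)); apply rep_dist. Qed.

Lemma forallb_ext_in : forall {A} (f g : A -> bool) l, (forall a, In a l -> f a = g a) -> forallb f l = forallb g l.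
Proof. intros A f g l; induction l; simpl; auto. intros H. rewrite H, IHl; auto. Qed.

Lemma filter_ext_in' : forall {A} (f g : A -> bool) l, (forall a, In a l -> f a = g a) -> filter f l = filter g l.
Proof. intros A f g l; induction l; simpl; auto. intros H. rewrite H, IHl; auto. Qed.

Definition Lsh (n : nat) (x : profile) : list R :=
  flat_map (fun pr => Lcmp (x (fst pr)) (x (snd pr))) (list_prod (seq 0 n) (seq 0 n)).

Lemma closestb_eq : forall n x y1 y2 m,
  (forall m', In m' (seq 0 n) -> cmpb y1 (x m) (x m') = cmpb y2 (x m) (x m')) ->
  closestb n x y1 m = closestb n x y2 m.
Proof. intros. unfold closestb. apply forallb_ext_in. intros a Ha. apply H; auto. Qed.

Lemma share_good : forall n x i j, (i < n)%nat -> goodG (Lsh n x) (fun t => share n x i (OnEdge j t)).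
Proof.
  intros n x i j Hi t1 t2 ? ? ? Hav.
  assert (HC : forall m m', In m (seq 0 n) -> In m' (seq 0 n) ->
     cmpb (OnEdge j t1) (x m) (x m') = cmpb (OnEdge j t2) (x m) (x m')).
  { intros m m' Hm Hm'. apply (cmp_good j (x m) (x m')); auto.
    intros z Hz. apply Hav. unfold Lsh. apply in_flat_map. exists (m, m'). split; auto.
    apply in_prod; auto. }
  assert (Hi' : In i (seq 0 n)) by (apply in_seq; lia).
  unfold share, n_closest_locs.
  rewrite (closestb_eq n x (OnEdge j t1) (OnEdge j t2) i) by auto.
  rewrite (filter_ext_in' _ (fun m => closestb n x (OnEdge j t2) m &&
     forallb (fun m' => negb (point_eqb (x m') (x m))) (seq 0 m)) (seq 0 n)); auto.
  intros a Ha. rewrite (closestb_eq n x (OnEdge j t1) (OnEdge j t2) a); auto.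
Qed.

Lemma goodG_PC : forall L f, goodG L f -> PC f.
Proof. intros L f H. exists L. intros t1 t2 ? ? ? ?. apply H; auto. Qed.

Lemma share_PC : forall n x i j, (i < n)%nat -> PC (fun t => share n x i (OnEdge j t)).
Proof. intros. eapply goodG_PC. apply share_good; auto. Qed.

Lemma point_eqb_iff : forall p q, point_eqb p q = true <-> p = q.
Proof.
  intros [|j t] [|j' s]; simpl; split; intro H; try congruence.
  - apply andb_prop in H as [H1 H2]. apply Nat.eqb_eq in H1.
    destruct (Req_EM_T t s); [subst; auto | discriminate].
  - inversion H; subst. rewrite Nat.eqb_refl. destruct (Req_EM_T s s); auto.
Qed.

Lemma point_eqb_refl : forall p, point_eqb p p = true.
Proof. intros; apply point_eqb_iff; auto. Qed.

Lemma closestb_iff : forall n x y m, closestb n x y m = true <->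
  forall m', (m' < n)%nat -> dist y (x m) <= dist y (x m').
Proof.
  intros. unfold closestb. rewrite forallb_forall. split; intros H m' Hm'.
  - specialize (H m' ltac:(apply in_seq; lia)). destruct Rle_dec; auto; discriminate.
  - apply in_seq in Hm'. destruct Rle_dec; auto. exfalso; apply n0, H; lia.
Qed.

Lemma INR_nn : forall m, 0 <= INR m. Proof. intros; apply pos_INR. Qed.

Lemma share_nonneg : forall n x i y, 0 <= share n x i y.
Proof.
  intros. unfold share. destruct closestb; [|lra].
  destruct (Req_dec (INR (n_closest_locs n x y) * INR (card_at n x (x i))) 0) as [E|E].
  - rewrite E, Rinv_0; lra.
  - apply Rlt_le, Rinv_0_lt_compat.
    pose proof (INR_nn (n_closest_locs n x y)); pose proof (INR_nn (card_at n x (x i))).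
    assert (0 <= INR (n_closest_locs n x y) * INR (card_at n x (x i))) by (apply Rmult_le_pos; auto). lra.
Qed.

Lemma share_zero : forall n x i y m, (m < n)%nat -> dist y (x m) < dist y (x i) -> share n x i y = 0.
Proof.
  intros. unfold share. destruct (closestb n x y i) eqn:E; auto.
  apply closestb_iff with (m' := m) in E; auto. lra.
Qed.

Lemma share_pos_closest : forall n x i y, 0 < share n x i y -> closestb n x y i = true.
Proof. intros. unfold share in H. destruct closestb; auto. lra. Qed.

Lemma forallb_false_ex : forall {A} (f : A -> bool) l, forallb f l = false -> exists a, In a l /\ f a = false.
Proof. intros A f l; induction l; simpl; intros H; [discriminate|].
  destruct (f a) eqn:E; simpl in H. destruct (IHl H) as [b [? ?]]; eauto. eauto. Qed.

Lemma first_occ : forall (x : profile) i, exists m0, (m0 <= i)%nat /\ x m0 = x i /\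
  forallb (fun m' => negb (point_eqb (x m') (x m0))) (seq 0 m0) = true.
Proof.
  intros x i. induction i as [i IH] using lt_wf_ind.
  destruct (forallb (fun m' => negb (point_eqb (x m') (x i))) (seq 0 i)) eqn:E.
  - exists i; auto.
  - apply forallb_false_ex in E as [m' [Hm' Hf]]. apply in_seq in Hm'.
    apply Bool.negb_false_iff, point_eqb_iff in Hf.
    destruct (IH m' ltac:(lia)) as [m0 [? [? ?]]]. exists m0; split; [lia|]. split; auto. congruence.
Qed.

Lemma length_pos_in : forall {A} (a : A) l, In a l -> (1 <= length l)%nat.
Proof. intros A a [|b l] H; simpl in *; [contradiction | lia]. Qed.

Lemma nloc_ge1 : forall n x y i, (i < n)%nat -> closestb n x y i = true -> (1 <= n_closest_locs n x y)%nat.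
Proof.
  intros n x y i Hi Hc. destruct (first_occ x i) as [m0 [Hm0 [Ex Hf]]].
  unfold n_closest_locs. apply (length_pos_in m0). apply filter_In. split.
  - apply in_seq; lia.
  - rewrite Hf, andb_true_r. unfold closestb in *. rewrite Ex. exact Hc.
Qed.

Lemma nloc_le : forall n x y, (n_closest_locs n x y <= n)%nat.
Proof. intros. unfold n_closest_locs. rewrite <- (length_seq n 0) at 2. apply filter_length_le. Qed.

Lemma card_ge1 : forall n x i, (i < n)%nat -> (1 <= card_at n x (x i))%nat.
Proof. intros. unfold card_at. apply (length_pos_in i). apply filter_In. split.
  apply in_seq; lia. apply point_eqb_refl. Qed.

Lemma card_le : forall n x p, (card_at n x p <= n)%nat.
Proof. intros. unfold card_at. rewrite <- (length_seq n 0) at 2. apply filter_length_le. Qed.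

Lemma share_le_card : forall n x i y, (i < n)%nat -> share n x i y <= / INR (card_at n x (x i)).
Proof.
  intros. unfold share. destruct (closestb n x y i) eqn:E.
  - pose proof (nloc_ge1 n x y i H E). pose proof (card_ge1 n x i H).
    apply le_INR in H0, H1. simpl in H0, H1.
    rewrite Rinv_mult. rewrite <- (Rmult_1_l (/ INR (card_at n x (x i)))) at 2.
    apply Rmult_le_compat_r. apply Rlt_le, Rinv_0_lt_compat; lra.
    rewrite <- Rinv_1. apply Rinv_le_contravar; lra.
  - apply Rlt_le, Rinv_0_lt_compat. pose proof (card_ge1 n x i H). apply le_INR in H0; simpl in H0; lra.
Qed.

Lemma share_ge_closest : forall n x i y, (i < n)%nat -> closestb n x y i = true ->
  / (INR n * INR n) <= share n x i y.
Proof.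
  intros. unfold share. rewrite H0.
  pose proof (nloc_ge1 n x y i H H0). pose proof (card_ge1 n x i H).
  pose proof (nloc_le n x y). pose proof (card_le n x (x i)).
  apply le_INR in H1, H2, H3, H4. simpl in H1, H2.
  apply Rinv_le_contravar. apply Rmult_lt_0_compat; lra.
  apply Rmult_le_compat; lra.
Qed.

Lemma filter_eqb_seq : forall n i, (i < n)%nat -> length (filter (fun m => Nat.eqb m i) (seq 0 n)) = 1%nat.
Proof.
  induction n; intros i Hi; [lia|]. rewrite seq_S, filter_app, length_app. simpl.
  destruct (Nat.eq_dec i n).
  - subst. rewrite Nat.eqb_refl. simpl.
    assert (length (filter (fun m => Nat.eqb m n) (seq 0 n)) = 0%nat).
    { rewrite (filter_ext_in' _ (fun _ => false)). clear. induction (seq 0 n); simpl; auto.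
      intros a Ha. apply in_seq in Ha. apply Nat.eqb_neq; lia. }
    lia.
  - rewrite IHn by lia. replace (Nat.eqb n i) with false by (symmetry; apply Nat.eqb_neq; lia). simpl; lia.
Qed.

Lemma share_one : forall n x i y, (i < n)%nat ->
  (forall m, (m < n)%nat -> m <> i -> dist y (x i) < dist y (x m)) -> share n x i y = 1.
Proof.
  intros n x i y Hi H.
  assert (Hc : closestb n x y i = true).
  { apply closestb_iff. intros m' Hm'. destruct (Nat.eq_dec m' i); [subst; lra|]. apply Rlt_le, H; auto. }
  unfold share. rewrite Hc.
  assert (E1 : n_closest_locs n x y = 1%nat).
  { unfold n_closest_locs. rewrite (filter_ext_in' _ (fun m => Nat.eqb m i)).
    apply filter_eqb_seq; auto.
    intros a Ha. apply in_seq in Ha. destruct (Nat.eq_dec a i).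
    - subst. rewrite Nat.eqb_refl, Hc. simpl. apply forallb_forall. intros m' Hm'. apply in_seq in Hm'.
      destruct (point_eqb (x m') (x i)) eqn:E; auto. apply point_eqb_iff in E.
      specialize (H m' ltac:(lia) ltac:(lia)). rewrite E in H; lra.
    - replace (Nat.eqb a i) with false by (symmetry; apply Nat.eqb_neq; auto).
      destruct (closestb n x y a) eqn:E; auto. apply closestb_iff with (m' := i) in E; auto.
      specialize (H a ltac:(lia) n0). lra. }
  assert (E2 : card_at n x (x i) = 1%nat).
  { unfold card_at. rewrite (filter_ext_in' _ (fun m => Nat.eqb m i)).
    apply filter_eqb_seq; auto.
    intros a Ha. apply in_seq in Ha. destruct (Nat.eq_dec a i).
    - subst. rewrite Nat.eqb_refl. apply point_eqb_refl.
    - replace (Nat.eqb a i) with false by (symmetry; apply Nat.eqb_neq; auto).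
      destruct (point_eqb (x a) (x i)) eqn:E; auto. apply point_eqb_iff in E.
      specialize (H a ltac:(lia) n0). rewrite E in H; lra. }
  rewrite E1, E2. simpl. field.
Qed.

Lemma update_eq : forall x i q, update x i q i = q.
Proof. intros. unfold update. rewrite Nat.eqb_refl. auto. Qed.
Lemma update_neq : forall x i q m, m <> i -> update x i q m = x m.
Proof. intros. unfold update. replace (Nat.eqb m i) with false by (symmetry; apply Nat.eqb_neq; auto). auto. Qed.

Lemma share_dev : forall n x i q y, (i < n)%nat -> 0 < share n x i y -> dist y q < dist y (x i) ->
  share n (update x i q) i y = 1.
Proof.
  intros. apply share_one; auto. intros m Hm Hmi.
  rewrite update_eq, update_neq by auto.
  apply share_pos_closest, closestb_iff with (m' := m) in H0; auto. lra.
Qed.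

Lemma share_dev1 : forall n x i q y, (i < n)%nat ->
  (forall m, (m < n)%nat -> m <> i -> dist y q < dist y (x m)) ->
  share n (update x i q) i y = 1.
Proof.
  intros. apply share_one; auto. intros m Hm Hmi.
  rewrite update_eq, update_neq by auto. auto.
Qed.

Definition sumL (f : nat -> R) (l : list nat) : R := fold_right Rplus 0 (map f l).

Definition E (n : nat) (x : profile) (i j : nat) : R := RInt (fun t => share n x i (OnEdge j t)) 0 1.

Lemma payoff_eq : forall k n x i, (i < n)%nat -> payoff k n x i = sumL (E n x i) (seq 1 k).
Proof.
  intros. unfold payoff, sumL. f_equal. apply map_ext. intros j.
  unfold E. apply integral01_PC, share_PC; auto.
Qed.

Lemma sumL_lin : forall (A B c : nat -> R) a l, (forall j, In j l -> A j >= a * B j + c j) ->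
  sumL A l >= a * sumL B l + sumL c l.
Proof. intros A B c a l; induction l; simpl; intros H; unfold sumL in *; simpl; [lra|].
  specialize (IHl (fun j Hj => H j (or_intror Hj))). specialize (H a0 (or_introl eq_refl)). nra. Qed.

Lemma sumL_nonneg : forall f l, (forall j, In j l -> 0 <= f j) -> 0 <= sumL f l.
Proof. intros f l; induction l; unfold sumL in *; simpl; intros; [lra|].
  pose proof (H a (or_introl eq_refl)). pose proof (IHl (fun j Hj => H j (or_intror Hj))). lra. Qed.

Lemma sumL_ge_one : forall f l j, (forall j, In j l -> 0 <= f j) -> In j l -> f j <= sumL f l.
Proof. intros f l; induction l; unfold sumL in *; simpl; intros j H Hj; [contradiction|].
  destruct Hj as [<-|Hj].
  - pose proof (sumL_nonneg f l (fun j Hj => H j (or_intror Hj))). unfold sumL in H0. lra.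
  - pose proof (H a (or_introl eq_refl)). pose proof (IHl j (fun j Hj => H j (or_intror Hj)) Hj). lra. Qed.

Lemma sumL_ind : forall c a l, NoDup l -> In a l -> sumL (fun j => if Nat.eqb j a then c else 0) l = c.
Proof.
  intros c a l; induction l; intros Hn Hi; [contradiction|]. inversion Hn; subst.
  unfold sumL in *; simpl. destruct Hi as [<-|Hi].
  - rewrite Nat.eqb_refl.
    assert (fold_right Rplus 0 (map (fun j => if Nat.eqb j a0 then c else 0) l) = 0).
    { clear -H1. induction l; simpl; auto. replace (Nat.eqb a a0) with false.
      rewrite IHl; [lra|]. intro; apply H1; simpl; auto.
      symmetry; apply Nat.eqb_neq. intro; subst; apply H1; simpl; auto. }
    lra.
  - replace (Nat.eqb a0 a) with false. rewrite IHl; auto; lra.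
    symmetry; apply Nat.eqb_neq. intro; subst; auto.
Qed.

Lemma sumL_add : forall f g l, sumL (fun j => f j + g j) l = sumL f l + sumL g l.
Proof. intros f g l; induction l; unfold sumL in *; simpl; [lra|]. rewrite IHl; lra. Qed.

Lemma sumL_const : forall c l, sumL (fun _ => c) l = INR (length l) * c.
Proof. intros c l; induction l; unfold sumL in *; simpl length; [simpl; lra|]. rewrite S_INR. simpl. rewrite IHl. lra. Qed.

Lemma sumL_max : forall f l, l <> nil -> exists j, In j l /\ sumL f l <= INR (length l) * f j.
Proof.
  intros f l; induction l; intros Hl; [congruence|]. destruct l as [|b l].
  - exists a. unfold sumL; simpl. split; auto. lra.
  - destruct (IHl ltac:(congruence)) as [j [Hj Hs]].
    destruct (Rle_dec (f a) (f j)).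
    + exists j. split; [right; auto|]. unfold sumL in *. simpl length in *. simpl map in *. simpl fold_right in *.
      rewrite !S_INR in *. assert (0 <= INR (length l)) by apply pos_INR. nra.
    + exists a. split; [left; auto|]. unfold sumL in *. simpl length in *. simpl map in *. simpl fold_right in *.
      rewrite !S_INR in *. assert (0 <= INR (length l)) by apply pos_INR.
      assert ((INR (length l) + 1) * f j <= (INR (length l) + 1) * f a) by (apply Rmult_le_compat_l; lra). nra.
Qed.

Lemma E_nonneg : forall n x i j, (i < n)%nat -> 0 <= E n x i j.
Proof. intros. unfold E. pose proof (RI_const 0) as R0. rewrite <- R0 at 1. apply RI_le; [apply PC_const| apply share_PC; auto|].
  intros; apply share_nonneg. Qed.

Lemma payoff_ge_E : forall k n x i j, (i < n)%nat -> (1 <= j <= k)%nat -> E n x i j <= payoff k n x i.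
Proof. intros. rewrite payoff_eq by auto. apply sumL_ge_one. intros; apply E_nonneg; auto.
  apply in_seq; lia. Qed.

Lemma payoff_nonneg : forall k n x i, (i < n)%nat -> 0 <= payoff k n x i.
Proof. intros. rewrite payoff_eq by auto. apply sumL_nonneg. intros; apply E_nonneg; auto. Qed.

Lemma E_ge : forall n x i j g, (i < n)%nat -> PC g -> (forall t, 0 < t < 1 -> g t <= share n x i (OnEdge j t)) ->
  RInt g 0 1 <= E n x i j.
Proof. intros. unfold E. apply RI_le; auto. apply share_PC; auto. Qed.

Lemma E_le : forall n x i j g, (i < n)%nat -> PC g -> (forall t, 0 < t < 1 -> share n x i (OnEdge j t) <= g t) ->
  E n x i j <= RInt g 0 1.
Proof. intros. unfold E. apply RI_le; auto. apply share_PC; auto. Qed.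

Lemma dist_sym : forall p q, dist p q = dist q p.
Proof. intros [|j t] [|j' s]; simpl; auto. rewrite Nat.eqb_sym. destruct (Nat.eqb j' j).
  apply Rabs_minus_sym. ring. Qed.

Definition nn (p : point) : Prop := 0 <= par p.

Lemma valid_nn : forall k p, valid k p -> nn p.
Proof. intros k [|j t]; unfold nn; simpl; intros; lra. Qed.

Lemma dist_tri : forall p q r, nn p -> nn q -> nn r -> dist p r <= dist p q + dist q r.
Proof.
  intros [|j1 t1] [|j2 t2] [|j3 t3]; unfold nn; simpl; intros; try lra;
  repeat match goal with |- context [Nat.eqb ?a ?b] => destruct (Nat.eqb_spec a b); subst end;
  try congruence; rabs; lra.
Qed.

Lemma dist_nonneg : forall p q, nn p -> nn q -> 0 <= dist p q.
Proof. intros [|j1 t1] [|j2 t2]; unfold nn; simpl; intros; try lra.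
  destruct (Nat.eqb j1 j2); [apply Rabs_pos| lra]. Qed.

Lemma dist_pos : forall k p q, valid k p -> valid k q -> p <> q -> 0 < dist p q.
Proof.
  intros k [|j1 t1] [|j2 t2]; simpl; intros; try lra. congruence.
  destruct (Nat.eqb_spec j1 j2); [subst|lra].
  apply Rabs_pos_lt. intro. apply H1. f_equal. lra.
Qed.

Lemma ex_delta : forall (P : nat -> Prop) (f : nat -> R) n, (forall m, (m < n)%nat -> P m -> 0 < f m) ->
  exists d, 0 < d /\ forall m, (m < n)%nat -> P m -> d <= f m.
Proof.
  intros P f n H. induction n.
  2: assert (IH := IHn (fun m Hm => H m ltac:(lia))); clear IHn; rename IH into IHn.
  - exists 1. split; [lra|]. intros; lia.
  - destruct IHn as [d [Hd Hm]]. destruct (classic (P n)) as [Pn|Pn].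
    + exists (Rmin d (f n)). split. apply Rmin_pos; auto.
      intros m Hm' Pm. destruct (Nat.eq_dec m n). subst. apply Rmin_r.
      eapply Rle_trans. apply Rmin_l. apply Hm; auto; lia.
    + exists d. split; auto. intros m Hm' Pm. destruct (Nat.eq_dec m n). subst; contradiction.
      apply Hm; auto; lia.
Qed.

Lemma ex_max : forall (P : nat -> Prop) (f : nat -> R) n, (exists m, (m < n)%nat /\ P m) ->
  exists m0, (m0 < n)%nat /\ P m0 /\ forall m, (m < n)%nat -> P m -> f m <= f m0.
Proof.
  intros P f n. induction n; intros [m [Hm Pm]]; [lia|].
  destruct (classic (exists m, (m < n)%nat /\ P m)) as [Ex|Nex].
  - destruct (IHn Ex) as [m0 [H1 [H2 H3]]].
    destruct (classic (P n /\ f m0 <= f n)) as [[Pn Hle]|Hn].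
    + exists n. split; [lia|]. split; auto. intros m' Hm' Pm'. destruct (Nat.eq_dec m' n); [subst; lra|].
      eapply Rle_trans; [apply H3; auto; lia| auto].
    + exists m0. split; [lia|]. split; auto. intros m' Hm' Pm'. destruct (Nat.eq_dec m' n).
      * subst. destruct (Rle_dec (f n) (f m0)); auto. exfalso; apply Hn; split; auto; lra.
      * apply H3; auto; lia.
  - assert (m = n) by (destruct (Nat.eq_dec m n); auto; exfalso; apply Nex; exists m; split; auto; lia).
    subst. exists n. split; [lia|]. split; auto. intros m' Hm' Pm'.
    destruct (Nat.eq_dec m' n); [subst; lra|]. exfalso; apply Nex; exists m'; split; auto; lia.
Qed.

Lemma ex_min : forall (P : nat -> Prop) (f : nat -> R) n, (exists m, (m < n)%nat /\ P m) ->
  exists m0, (m0 < n)%nat /\ P m0 /\ forall m, (m < n)%nat -> P m -> f m0 <= f m.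
Proof.
  intros P f n H. destruct (ex_max P (fun m => - f m) n H) as [m0 [? [? ?]]].
  exists m0. repeat split; auto. intros. specialize (H2 m H3 H4). lra.
Qed.

Lemma closest_near : forall k n x i y d, (i < n)%nat -> (forall m, (m < n)%nat -> valid k (x m)) -> nn y ->
  (forall m, (m < n)%nat -> x m <> x i -> d <= dist (x i) (x m)) -> dist y (x i) < d / 2 ->
  closestb n x y i = true.
Proof.
  intros k n x i y d Hi Hv Hy Hd Hyd. apply closestb_iff. intros m Hm.
  destruct (classic (x m = x i)) as [E|E]. rewrite E; lra.
  specialize (Hd m Hm E).
  pose proof (dist_tri (x i) y (x m) (valid_nn k _ (Hv i Hi)) Hy (valid_nn k _ (Hv m Hm))).
  rewrite (dist_sym (x i) y) in H. lra.
Qed.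

Lemma RI_cind : forall c u v, 0 <= u -> u <= v -> v <= 1 -> RInt (fun t => c * ind u v t) 0 1 = c * (v - u).
Proof. intros. rewrite RI_scal by apply PC_ind. rewrite RI_ind; auto. Qed.

Lemma PC_cind : forall c u v, PC (fun t => c * ind u v t).
Proof. intros. apply (PC_comb (fun _ => c) (ind u v) Rmult). apply PC_const. apply PC_ind. Qed.

Lemma payoff_pos : forall k n x i, (1 <= k)%nat -> (i < n)%nat -> (forall m, (m < n)%nat -> valid k (x m)) ->
  0 < payoff k n x i.
Proof.
  intros k n x i Hk Hi Hv.
  destruct (ex_delta (fun m => x m <> x i) (fun m => dist (x i) (x m)) n) as [d [Hd Hdm]].
  { intros m Hm Hne. apply (dist_pos k); auto. }
  set (c := / (INR n * INR n)).
  assert (Hc : 0 < c). { unfold c. apply Rinv_0_lt_compat. assert (1 <= INR n) by (apply (le_INR 1); lia). nra. }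
  assert (Hsh : forall y, nn y -> dist y (x i) < d / 2 -> c <= share n x i y).
  { intros y Hy Hyd. apply share_ge_closest; auto. apply (closest_near k n x i y d); auto. }
  pose proof (Hv i Hi) as Hvi.
  destruct (x i) as [|j s] eqn:Exi.
  - set (v := Rmin (d/4) 1).
    assert (0 < v) by (apply Rmin_pos; lra). assert (v <= 1) by apply Rmin_r. assert (v <= d/4) by apply Rmin_l.
    apply Rlt_le_trans with (E n x i 1). 2: apply payoff_ge_E; auto.
    apply Rlt_le_trans with (RInt (fun t => c * ind 0 v t) 0 1).
    rewrite RI_cind by lra. nra.
    apply E_ge; auto. apply PC_cind. intros t Ht. unfold ind.
    destruct Rle_dec; [destruct Rlt_dec|]; try (rewrite Rmult_0_r; apply share_nonneg).
    rewrite Rmult_1_r. apply Hsh. unfold nn; simpl; lra. simpl. lra.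
  - simpl in Hvi.
    set (u := Rmax (s/2) (s - d/4)).
    assert (s/2 <= u) by apply Rmax_l. assert (s - d/4 <= u) by apply Rmax_r.
    assert (u < s) by (apply Rmax_lub_lt; lra).
    apply Rlt_le_trans with (E n x i j). 2: apply payoff_ge_E; auto; lia.
    apply Rlt_le_trans with (RInt (fun t => c * ind u s t) 0 1).
    rewrite RI_cind by lra. nra.
    apply E_ge; auto. apply PC_cind. intros t Ht. unfold ind.
    destruct Rle_dec; [destruct Rlt_dec|]; try (rewrite Rmult_0_r; apply share_nonneg).
    rewrite Rmult_1_r. apply Hsh. unfold nn; simpl; lra. simpl. rewrite Nat.eqb_refl.
    rewrite Rabs_left by lra. lra.
Qed.

Lemma NE_dev : forall k n x i q, is_NE k n x -> (i < n)%nat -> valid k q ->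
  payoff k n (update x i q) i <= payoff k n x i.
Proof. intros k n x i q [_ H] Hi Hq. apply H; auto. Qed.

Lemma card_ex : forall n x p, (1 <= card_at n x p)%nat -> exists i, (i < n)%nat /\ x i = p.
Proof.
  intros n x p H. unfold card_at in H.
  destruct (filter (fun m => point_eqb (x m) p) (seq 0 n)) as [|i l] eqn:Ef; simpl in H; [lia|].
  assert (In i (filter (fun m => point_eqb (x m) p) (seq 0 n))) by (rewrite Ef; left; auto).
  apply filter_In in H0 as [H1 H2]. apply in_seq in H1. apply point_eqb_iff in H2. exists i; split; auto; lia.
Qed.

Lemma RI_lin2 : forall a b f g, PC f -> PC g ->
  RInt (fun t => a * f t + b * g t) 0 1 = a * RInt f 0 1 + b * RInt g 0 1.
Proof. intros. rewrite RI_lin; auto. rewrite RI_scal; auto.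
  apply (PC_comb (fun _ => b) g Rmult); auto; apply PC_const. Qed.

Lemma PC_lin2 : forall a b f g, PC f -> PC g -> PC (fun t => a * f t + b * g t).
Proof. intros. apply (PC_comb f g (fun u v => a * u + b * v)); auto. Qed.

Lemma ind_le1 : forall u v t, 0 <= ind u v t <= 1.
Proof. intros. unfold ind. repeat destruct Rle_dec; repeat destruct Rlt_dec; lra. Qed.

Lemma share_card_mul : forall n x i y, (i < n)%nat -> INR (card_at n x (x i)) * share n x i y <= 1.
Proof.
  intros. pose proof (share_le_card n x i y H). pose proof (card_ge1 n x i H).
  apply le_INR in H1. simpl in H1. pose proof (share_nonneg n x i y).
  apply Rmult_le_compat_l with (r := INR (card_at n x (x i))) in H0; [|lra].
  rewrite Rinv_r in H0; lra.
Qed.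

Lemma part_c : forall k n x, (3 <= k)%nat -> is_NE k n x -> (card_at n x Center <= k)%nat.
Proof.
  intros k n x Hk HNE. destruct (le_lt_dec (card_at n x Center) k) as [|Hc]; auto. exfalso.
  destruct (card_ex n x Center ltac:(lia)) as [i [Hi Exi]].
  set (c := INR (card_at n x Center)).
  assert (Hck : INR k + 1 <= c). { unfold c. rewrite <- S_INR. apply le_INR. lia. }
  assert (HkR : 3 <= INR k) by (assert (H3 := le_INR 3 k ltac:(lia)); simpl in H3; lra).
  pose proof (payoff_pos k n x i ltac:(lia) Hi (proj1 HNE)) as Hu.
  set (u := payoff k n x i) in *.
  destruct (sumL_max (E n x i) (seq 1 k)) as [j [Hj Hmax]].
  { destruct k; [lia|]. simpl; congruence. }
  rewrite length_seq in Hmax. rewrite <- payoff_eq in Hmax by auto. fold u in Hmax.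
  apply in_seq in Hj.
  set (eps := Rmin 1 (u * (c - INR k) / (2 * INR k))).
  assert (He1 : eps <= 1) by apply Rmin_l.
  assert (He2 : eps <= u * (c - INR k) / (2 * INR k)) by apply Rmin_r.
  assert (He0 : 0 < eps). { apply Rmin_pos; [lra|]. apply Rdiv_lt_0_compat; nra. }
  set (q := OnEdge j eps).
  assert (Hq : valid k q) by (simpl; split; [lia|lra]).
  pose proof (NE_dev k n x i q HNE Hi Hq) as Hdev.
  assert (Hdj : c * E n x i j - eps <= E n (update x i q) i j).
  { replace (c * E n x i j - eps) with (RInt (fun t => c * share n x i (OnEdge j t) + (-1) * ind 0 eps t) 0 1).
    2: { rewrite RI_lin2 by first [apply share_PC; auto | apply PC_ind]. rewrite RI_ind by lra. unfold E. lra. }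
    apply E_ge; auto. apply PC_lin2; [apply share_PC; auto| apply PC_ind].
    intros t Ht. pose proof (share_card_mul n x i (OnEdge j t) Hi) as Hcm. rewrite Exi in Hcm. fold c in Hcm.
    pose proof (share_nonneg n (update x i q) i (OnEdge j t)).
    unfold ind. destruct Rle_dec; [destruct Rlt_dec|]; try lra.
    destruct (Rle_lt_or_eq_dec _ _ (share_nonneg n x i (OnEdge j t))) as [Hp|Hz].
    - rewrite share_dev; auto. lra. rewrite Exi. unfold q; simpl. rewrite Nat.eqb_refl.
      rewrite Rabs_right by lra. lra.
    - rewrite <- Hz. lra. }
  pose proof (payoff_ge_E k n (update x i q) i j Hi ltac:(lia)).
  assert (u <= INR k * E n x i j) by exact Hmax.
  assert (c * E n x i j >= c * (u / INR k)).
  { apply Rle_ge, Rmult_le_compat_l; [lra|]. apply Rmult_le_reg_r with (INR k); [lra|].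
    unfold Rdiv. rewrite Rmult_assoc, Rinv_l by lra. lra. }
  assert (c * (u / INR k) - eps > u).
  { assert (c * (u / INR k) = u + u * (c - INR k) / INR k) by (field; lra).
    assert (u * (c - INR k) / (2 * INR k) * 2 = u * (c - INR k) / INR k) by (field; lra).
    assert (0 < u * (c - INR k) / (2 * INR k)) by (apply Rdiv_lt_0_compat; nra). lra. }
  fold u in Hdev. lra.
Qed.

Lemma seq_NoDup : forall a b, NoDup (seq a b).
Proof. intros. apply seq_NoDup. Qed.

Lemma dev_sum : forall k n x x' i j a c0, (i < n)%nat -> (1 <= j <= k)%nat ->
  (forall j', (1 <= j' <= k)%nat -> j' <> j -> E n x' i j' >= a * E n x i j') ->
  E n x' i j >= a * E n x i j + c0 ->
  payoff k n x' i >= a * payoff k n x i + c0.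
Proof.
  intros. rewrite !payoff_eq by auto.
  assert (Hc : sumL (fun j' => if Nat.eqb j' j then c0 else 0) (seq 1 k) = c0).
  { apply sumL_ind. apply seq_NoDup. apply in_seq; lia. }
  rewrite <- Hc.
  apply sumL_lin. intros j' Hj'. apply in_seq in Hj'.
  destruct (Nat.eq_dec j' j). subst. rewrite Nat.eqb_refl. auto.
  replace (Nat.eqb j' j) with false by (symmetry; apply Nat.eqb_neq; auto).
  specialize (H1 j' ltac:(lia) n0). lra.
Qed.

Lemma RI_lin3 : forall a b c f g h, PC f -> PC g -> PC h ->
  RInt (fun t => a * f t + b * g t + c * h t) 0 1 = a * RInt f 0 1 + b * RInt g 0 1 + c * RInt h 0 1.
Proof. intros. rewrite (RInt_ext (fun t => a * f t + b * g t + c * h t) (fun t => 1 * (a * f t + b * g t) + c * h t))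
  by (intros; lra).
  rewrite (RI_lin 1 (fun t => a * f t + b * g t) (fun t => c * h t)).
  rewrite RI_lin2 by auto. rewrite RI_scal by auto. lra.
  apply PC_lin2; auto. apply (PC_comb (fun _ => c) h Rmult); auto; apply PC_const. Qed.

Lemma PC_lin3 : forall a b c f g h, PC f -> PC g -> PC h -> PC (fun t => a * f t + b * g t + c * h t).
Proof. intros. apply (PC_comb (fun t => a * f t + b * g t) h (fun u v => u + c * v)); auto. apply PC_lin2; auto. Qed.

Definition pshare n x i j s t := share n x i (OnEdge j t) * ind s 2 t.

Lemma PC_pshare : forall n x i j s, (i < n)%nat -> PC (pshare n x i j s).
Proof. intros. unfold pshare. apply (PC_comb _ (ind s 2) Rmult). apply share_PC; auto. apply PC_ind. Qed.

Lemma share_mul_dev : forall n x i q y r, (i < n)%nat -> r = INR (card_at n x (x i)) ->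
  dist y q < dist y (x i) -> r * share n x i y <= share n (update x i q) i y.
Proof.
  intros. pose proof (share_card_mul n x i y H). rewrite <- H0 in H2.
  destruct (Rle_lt_or_eq_dec _ _ (share_nonneg n x i y)) as [Hp|Hz].
  - rewrite share_dev; auto.
  - rewrite <- Hz. rewrite Rmult_0_r. apply share_nonneg.
Qed.

Lemma part_b : forall k n x p, (3 <= k)%nat -> is_NE k n x -> valid k p -> p <> Center ->
  (card_at n x p <= 2)%nat.
Proof.
  intros k n x p Hk HNE Hp Hpc. destruct (le_lt_dec (card_at n x p) 2) as [|Hc]; auto. exfalso.
  destruct (card_ex n x p ltac:(lia)) as [i [Hi Exi]].
  destruct p as [|j s]; [congruence|]. simpl in Hp.
  set (r := INR (card_at n x (OnEdge j s))).
  assert (Hr : 3 <= r) by (unfold r; assert (H3 := le_INR 3 _ Hc); simpl in H3; lra).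
  pose proof (payoff_pos k n x i ltac:(lia) Hi (proj1 HNE)) as Hu.
  set (u := payoff k n x i) in *.
  set (Out := RInt (pshare n x i j s) 0 1).
  assert (Hrs : forall y, r * share n x i y <= 1).
  { intros y. pose proof (share_card_mul n x i y Hi). rewrite Exi in H. exact H. }
  assert (Hin : forall eps, 0 < eps < s -> u >= r * u - r * Out - eps).
  { intros eps He. set (q := OnEdge j (s - eps)).
    assert (Hq : valid k q) by (simpl; split; [lia|lra]).
    pose proof (NE_dev k n x i q HNE Hi Hq) as Hdev. fold u in Hdev.
    assert (payoff k n (update x i q) i >= r * u + - (r * Out + eps)).
    { apply (dev_sum k n x _ i j); auto; try lia.
      - intros j' Hj' Hne. unfold E. apply Rle_ge. rewrite <- RI_scal by (apply share_PC; auto).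
        apply RI_le; [apply (PC_comb (fun _ => r) _ Rmult); [apply PC_const| apply share_PC; auto]| apply share_PC; auto|].
        intros t Ht. apply share_mul_dev; auto. rewrite Exi; auto.
        rewrite Exi. unfold q; simpl. replace (Nat.eqb j' j) with false by (symmetry; apply Nat.eqb_neq; auto). lra.
      - apply Rle_ge.
        replace (r * E n x i j + - (r * Out + eps)) with
          (RInt (fun t => r * share n x i (OnEdge j t) + (-r) * pshare n x i j s t + (-1) * ind (s - eps) s t) 0 1).
        2: { rewrite RI_lin3. rewrite RI_ind by lra. unfold E, Out. lra.
             apply share_PC; auto. apply PC_pshare; auto. apply PC_ind. }
        apply E_ge; auto. apply PC_lin3; [apply share_PC; auto| apply PC_pshare; auto| apply PC_ind].
        intros t Ht. unfold pshare, ind. pose proof (Hrs (OnEdge j t)).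
        pose proof (share_nonneg n x i (OnEdge j t)). pose proof (share_nonneg n (update x i q) i (OnEdge j t)).
        destruct (Rle_dec s t); [destruct (Rlt_dec t 2)|]; destruct (Rle_dec (s - eps) t); try destruct (Rlt_dec t s); try lra.
        assert (r * share n x i (OnEdge j t) <= share n (update x i q) i (OnEdge j t)).
        { apply share_mul_dev; auto. rewrite Exi; auto. rewrite Exi; unfold q; simpl. rewrite Nat.eqb_refl.
          rewrite !Rabs_left by lra. lra. }
        lra. }
    lra. }
  assert (HOut0 : 0 <= Out).
  { unfold Out. rewrite <- (RI_const 0) at 1. apply RI_le. apply PC_const. apply PC_pshare; auto.
    intros t Ht. unfold pshare. pose proof (ind_le1 s 2 t). pose proof (share_nonneg n x i (OnEdge j t)). nra. }
  destruct (Rlt_or_le s 1) as [Hs1|Hs1].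
  -
    assert (Hout : forall eps, 0 < eps <= 1 - s -> u >= r * Out - eps).
    { intros eps He. set (q := OnEdge j (s + eps)).
      assert (Hq : valid k q) by (simpl; split; [lia|lra]).
      pose proof (NE_dev k n x i q HNE Hi Hq) as Hdev. fold u in Hdev.
      pose proof (payoff_ge_E k n (update x i q) i j Hi ltac:(lia)).
      assert (r * Out - eps <= E n (update x i q) i j).
      { replace (r * Out - eps) with (RInt (fun t => r * pshare n x i j s t + (-1) * ind s (s + eps) t) 0 1).
        2: { rewrite RI_lin2 by (apply PC_pshare || apply PC_ind; auto). rewrite RI_ind by lra. unfold Out. lra. }
        apply E_ge; auto. apply PC_lin2; [apply PC_pshare; auto| apply PC_ind].
        intros t Ht. unfold pshare, ind. pose proof (Hrs (OnEdge j t)).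
        pose proof (share_nonneg n x i (OnEdge j t)). pose proof (share_nonneg n (update x i q) i (OnEdge j t)).
        destruct (Rle_dec s t); [destruct (Rlt_dec t 2)|]; try destruct (Rlt_dec t (s + eps)); try lra.
        assert (r * share n x i (OnEdge j t) <= share n (update x i q) i (OnEdge j t)).
        { apply share_mul_dev; auto. rewrite Exi; auto. rewrite Exi; unfold q; simpl. rewrite Nat.eqb_refl.
          rewrite !Rabs_right by lra. lra. }
        lra. }
      lra. }
    set (eps := Rmin (Rmin (s/2) (1 - s)) (u / 4)).
    assert (eps <= Rmin (s/2) (1-s)) by apply Rmin_l. assert (eps <= u/4) by apply Rmin_r.
    assert (Rmin (s/2) (1-s) <= s/2) by apply Rmin_l. assert (Rmin (s/2) (1-s) <= 1 - s) by apply Rmin_r.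
    assert (0 < eps) by (apply Rmin_pos; [apply Rmin_pos|]; lra).
    specialize (Hin eps ltac:(lra)). specialize (Hout eps ltac:(lra)). nra.
  - assert (Out = 0).
    { unfold Out. transitivity (RInt (fun _ : R => 0) 0 1); [|apply RI_const]. apply RInt_ext. intros t Ht.
      rewrite Rmin_left in Ht by lra. rewrite Rmax_right in Ht by lra.
      unfold pshare, ind. destruct Rle_dec; [lra|]. lra. }
    set (eps := Rmin (s/2) (u / 4)).
    assert (eps <= s/2) by apply Rmin_l. assert (eps <= u/4) by apply Rmin_r.
    assert (0 < eps) by (apply Rmin_pos; lra).
    specialize (Hin eps ltac:(lra)). nra.
Qed.

Definition indO (u v t : R) : R :=
  if Rlt_dec u t then if Rlt_dec t v then 1 else 0 else 0.

Lemma PC_indO : forall u v, PC (indO u v).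
Proof.
  intros u v. exists [u; v]. intros t1 t2 ? ? ? Hav. unfold indO.
  destruct (Hav u) as [Hu|Hu]; [simpl; auto| |];
  destruct (Hav v) as [Hv|Hv]; try (simpl; auto; fail);
  repeat (destruct Rlt_dec); try lra; auto.
Qed.

Lemma RI_indO : forall u v, 0 <= u -> u <= v -> v <= 1 -> RInt (indO u v) 0 1 = v - u.
Proof.
  intros u v ? ? ?.
  assert (P := PC_indO u v).
  rewrite <- (RInt_Chasles (indO u v) 0 v 1) by (apply PC_exab; auto; lra).
  rewrite <- (RInt_Chasles (indO u v) 0 u v) by (apply PC_exab; auto; lra).
  unfold plus; simpl.
  rewrite (RI_piece _ 0 u 0), (RI_piece _ u v 1), (RI_piece _ v 1 0); try lra;
  intros t Ht; unfold indO; repeat destruct Rlt_dec; lra.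
Qed.

Lemma indO_01 : forall u v t, 0 <= indO u v t <= 1.
Proof. intros. unfold indO. repeat destruct Rlt_dec; lra. Qed.

Lemma share_le1 : forall n x i y, (i < n)%nat -> share n x i y <= 1.
Proof. intros. pose proof (share_card_mul n x i y H). pose proof (card_ge1 n x i H).
  apply le_INR in H1. simpl in H1. pose proof (share_nonneg n x i y). nra. Qed.

Lemma share_ge_if : forall n x x' i y, (i < n)%nat ->
  (0 < share n x i y -> share n x' i y = 1) -> share n x i y <= share n x' i y.
Proof. intros. destruct (Rle_lt_or_eq_dec _ _ (share_nonneg n x i y)) as [Hp|Hz].
  rewrite H0; auto. apply share_le1; auto. rewrite <- Hz. apply share_nonneg. Qed.

Lemma E_ge_lin : forall n x x' i j a h, (i < n)%nat -> PC h ->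
  (forall t, 0 < t < 1 -> a * share n x i (OnEdge j t) + h t <= share n x' i (OnEdge j t)) ->
  E n x' i j >= a * E n x i j + RInt h 0 1.
Proof.
  intros. apply Rle_ge. unfold E. rewrite <- RI_lin by first [apply share_PC; auto | auto].
  apply RI_le; auto. apply (PC_comb (fun t => share n x i (OnEdge j t)) h (fun u v => a * u + v)); auto.
  apply share_PC; auto. apply share_PC; auto.
Qed.

Lemma dev_gen : forall k n x x' i a c, (i < n)%nat ->
  (forall j, (1 <= j <= k)%nat -> E n x' i j >= a * E n x i j + c j) ->
  payoff k n x' i >= a * payoff k n x i + sumL c (seq 1 k).
Proof. intros. rewrite !payoff_eq by auto. apply sumL_lin. intros j Hj. apply in_seq in Hj. apply H0; lia. Qed.

Lemma sumL_ind1 : forall c a k, (1 <= a <= k)%nat -> sumL (fun j => if Nat.eqb j a then c else 0) (seq 1 k) = c.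
Proof. intros. apply sumL_ind. apply seq_NoDup. apply in_seq; lia. Qed.

Lemma sumL_le : forall f g l, (forall j, In j l -> f j <= g j) -> sumL f l <= sumL g l.
Proof. intros f g l; induction l; unfold sumL in *; simpl; intros; [lra|].
  pose proof (H a (or_introl eq_refl)). pose proof (IHl (fun j Hj => H j (or_intror Hj))). lra. Qed.

Lemma sumL_ext : forall f g l, (forall j, In j l -> f j = g j) -> sumL f l = sumL g l.
Proof. intros f g l; induction l; unfold sumL in *; simpl; intros; [lra|].
  rewrite (H a (or_introl eq_refl)), (IHl (fun j Hj => H j (or_intror Hj))). lra. Qed.

Lemma inner_nb : forall k n x i j s i0, (forall m, (m < n)%nat -> valid k (x m)) ->
  (i < n)%nat -> x i = OnEdge j s -> (i0 < n)%nat -> x i0 = Center ->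
  (forall m, (m < n)%nat -> m <> i -> x m <> x i) ->
  (forall m s', (m < n)%nat -> x m = OnEdge j s' -> s' <= s) ->
  exists a w, 0 <= a < s /\ (w < n)%nat /\ w <> i /\ (x w = OnEdge j a \/ (a = 0 /\ x w = Center)) /\
    forall m s', (m < n)%nat -> m <> i -> x m = OnEdge j s' -> s' <= a.
Proof.
  intros k n x i j s i0 Hv Hi Exi Hi0 Ex0 Hsep Hmax.
  destruct (classic (exists m, (m < n)%nat /\ (m <> i /\ exists s', x m = OnEdge j s'))) as [Ex|Nex].
  - destruct (ex_max (fun m => m <> i /\ exists s', x m = OnEdge j s') (fun m => par (x m)) n Ex)
      as [m0 [Hm0 [[Hne [a Ea]] Hmx]]].
    exists a, m0. pose proof (Hv m0 Hm0) as Hv0. rewrite Ea in Hv0. simpl in Hv0.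
    pose proof (Hmax m0 a Hm0 Ea). pose proof (Hsep m0 Hm0 Hne) as Hd. rewrite Ea, Exi in Hd.
    assert (a <> s) by (intro; subst; apply Hd; auto).
    repeat split; try lra; auto.
    intros m s' Hm Hmi Em. specialize (Hmx m Hm (conj Hmi (ex_intro _ s' Em))). rewrite Em, Ea in Hmx. exact Hmx.
  - exists 0, i0. pose proof (Hv i Hi) as Hvi; rewrite Exi in Hvi; simpl in Hvi.
    repeat split; try lra; auto.
    + intro; subst. rewrite Exi in Ex0; discriminate.
    + intros m s' Hm Hmi Em. exfalso. apply Nex. exists m. eauto.
Qed.

Lemma card_two : forall n x p m1 m2, (m1 < n)%nat -> (m2 < n)%nat -> m1 <> m2 -> x m1 = p -> x m2 = p ->
  (2 <= card_at n x p)%nat.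
Proof.
  intros. unfold card_at.
  change 2%nat with (length [m1; m2]). apply NoDup_incl_length.
  - constructor; [simpl; intuition|]. constructor; [simpl; auto| constructor].
  - intros z Hz. apply filter_In. simpl in Hz. destruct Hz as [<-|[<-|[]]]; split;
    try (apply in_seq; lia); apply point_eqb_iff; auto.
Qed.

Lemma card_one_sep : forall n x i m, (i < n)%nat -> card_at n x (x i) = 1%nat -> (m < n)%nat -> m <> i -> x m <> x i.
Proof. intros. intro. pose proof (card_two n x (x i) m i H1 H H2 H3 eq_refl). lia. Qed.

Ltac dcase_pt := simpl; repeat match goal with |- context [Nat.eqb ?a ?b] => destruct (Nat.eqb_spec a b); try subst end.

Lemma ex_eq : forall r : R, exists e, e = r.
Proof. eauto. Qed.

Ltac dcase := simpl; rewrite ?Nat.eqb_refl; repeat match goal with |- context [Nat.eqb ?a ?b] => destruct (Nat.eqb_spec a b); try subst end; try congruence.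

Lemma E_ge_mul : forall n x x' i j a, (i < n)%nat ->
  (forall t, 0 < t < 1 -> a * share n x i (OnEdge j t) <= share n x' i (OnEdge j t)) ->
  E n x' i j >= a * E n x i j.
Proof. intros. apply Rle_ge. unfold E. rewrite <- RI_scal by (apply share_PC; auto).
  apply RI_le. apply (PC_comb (fun _ => a) (fun t => share n x i (OnEdge j t)) Rmult). apply PC_const.
  apply share_PC; auto. apply share_PC; auto. auto. Qed.

Lemma outer_pair : forall k n x i j s i0, is_NE k n x ->
  (i < n)%nat -> x i = OnEdge j s -> (i0 < n)%nat -> x i0 = Center ->
  (forall m s', (m < n)%nat -> x m = OnEdge j s' -> s' <= s) ->
  (2 <= card_at n x (x i))%nat.
Proof.
  intros k n x i j s i0 HNE Hi Exi Hi0 Ex0 Hmax.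
  destruct (le_lt_dec 2 (card_at n x (x i))) as [|Hc]; auto. exfalso.
  pose proof (card_ge1 n x i Hi).
  assert (Hsep : forall m, (m < n)%nat -> m <> i -> x m <> x i) by (intros; apply (card_one_sep n); auto; lia).
  pose proof (proj1 HNE) as Hv.
  destruct (inner_nb k n x i j s i0 Hv Hi Exi Hi0 Ex0 Hsep Hmax) as [a [w [Ha [Hw [Hwi [Hwx Hle]]]]]].
  pose proof (Hv i Hi) as Hvi. rewrite Exi in Hvi. simpl in Hvi.
  destruct (ex_eq ((s - a) / 4)) as [eps Heps].
  set (q := OnEdge j (s - eps)).
  assert (Hq : valid k q) by (simpl; split; [lia|lra]).
  destruct (ex_eq ((a + s - eps / 2) / 2)) as [u Hu]. destruct (ex_eq ((a + s) / 2)) as [v Hv'].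
  assert (Hgen : forall t, 0 < t < 1 -> 0 < share n x i (OnEdge j t) -> share n (update x i q) i (OnEdge j t) = 1).
  { intros t Ht Hp. destruct (Rle_dec t (s - eps)).
    - apply share_dev; auto. rewrite Exi. unfold q. dcase. rabs; lra.
    - apply share_dev1; auto.
      intros m Hm Hmi. pose proof (Hv m Hm) as Hvm. pose proof (Hle m) as Hlem. unfold q.
      destruct (x m) as [|jm sm] eqn:Em; dcase; simpl in Hvm;
      try (specialize (Hlem sm Hm Hmi eq_refl)); rabs; lra. }
  assert (HE : forall j', (1 <= j' <= k)%nat ->
     E n (update x i q) i j' >= 1 * E n x i j' + (if Nat.eqb j' j then v - u else 0)).
  { intros j' Hj'. destruct (Nat.eqb_spec j' j).
    - subst j'. rewrite <- (RI_indO u v) by lra.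
      apply E_ge_lin; auto. apply PC_indO.
      intros t Ht. unfold indO. destruct (Rlt_dec u t); [destruct (Rlt_dec t v)|].
      + rewrite (share_zero n x i (OnEdge j t) w); auto.
        rewrite share_dev1; auto. lra.
        * intros m Hm Hmi. pose proof (Hv m Hm) as Hvm. pose proof (Hle m) as Hlem. unfold q.
          destruct (x m) as [|jm sm] eqn:Em; dcase; simpl in Hvm;
          try (specialize (Hlem sm Hm Hmi eq_refl)); rabs; lra.
        * rewrite Exi. destruct Hwx as [Ew|[Ea0 Ew]]; rewrite Ew; dcase; rabs; lra.
      + rewrite Rmult_1_l, Rplus_0_r. apply share_ge_if; auto.
      + rewrite Rmult_1_l, Rplus_0_r. apply share_ge_if; auto.
    - rewrite Rplus_0_r. apply E_ge_mul; auto. intros t Ht. rewrite Rmult_1_l. apply share_ge_if; auto.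
      intros Hp. apply share_dev; auto. rewrite Exi. unfold q. dcase. lra. }
  pose proof (dev_gen k n x (update x i q) i 1 _ Hi HE) as Hd.
  rewrite sumL_ind1 in Hd by lia.
  pose proof (NE_dev k n x i q HNE Hi Hq). lra.
Qed.

Lemma E_le_const : forall n x i j c, (i < n)%nat -> (forall t, 0 < t < 1 -> share n x i (OnEdge j t) <= c) ->
  E n x i j <= c.
Proof. intros. rewrite <- (RI_const c). apply E_le; auto. apply PC_const. Qed.

Lemma outermost : forall n x j, (exists m, (m < n)%nat /\ exists s, x m = OnEdge j s) ->
  exists i s, (i < n)%nat /\ x i = OnEdge j s /\ forall m s', (m < n)%nat -> x m = OnEdge j s' -> s' <= s.
Proof.
  intros n x j Ex. destruct (ex_max (fun m => exists s, x m = OnEdge j s) (fun m => par (x m)) n Ex)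
    as [i [Hi [[s Es] Hm]]].
  exists i, s. repeat split; auto. intros m s' Hm' Em. specialize (Hm m Hm' (ex_intro _ s' Em)).
  rewrite Em, Es in Hm. exact Hm.
Qed.

Lemma edge_nonempty : forall k n x i0 j, (3 <= k)%nat -> is_NE k n x -> (i0 < n)%nat -> x i0 = Center ->
  (exists i, (i < n)%nat /\ x i <> Center) -> (1 <= j <= k)%nat ->
  exists m, (m < n)%nat /\ exists s, x m = OnEdge j s.
Proof.
  intros k n x i0 j Hk HNE Hi0 Ex0 [i1 [Hi1 Ex1]] Hj.
  apply NNPP. intro Hno.
  pose proof (proj1 HNE) as Hv.
  destruct (x i1) as [|j1 s1] eqn:E1; [congruence|].
  destruct (outermost n x j1) as [i [s [Hi [Exi Hmax]]]]. { exists i1; eauto. }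
  pose proof (outer_pair k n x i j1 s i0 HNE Hi Exi Hi0 Ex0 Hmax) as Hc2.
  pose proof (Hv i Hi) as Hvi. rewrite Exi in Hvi. simpl in Hvi.
  assert (Hu : payoff k n x i <= 1/2).
  { rewrite payoff_eq by auto. rewrite <- (sumL_ind1 (1/2) j1 k) by lia. apply sumL_le.
    intros j' Hj'. apply in_seq in Hj'. apply E_le_const; auto. intros t Ht.
    destruct (Nat.eqb_spec j' j1).
    - eapply Rle_trans. apply share_le_card; auto. apply le_INR in Hc2. simpl in Hc2.
      replace (1/2) with (/2) by field. apply Rinv_le_contravar; lra.
    - rewrite (share_zero n x i _ i0); auto. lra. rewrite Ex0, Exi. dcase. lra. }
  set (q := OnEdge j (1/2)).
  assert (Hq : valid k q) by (simpl; split; [lia|lra]).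
  pose proof (NE_dev k n x i q HNE Hi Hq) as Hd.
  pose proof (payoff_ge_E k n (update x i q) i j Hi Hj) as Hge.
  assert (3/4 <= E n (update x i q) i j).
  { replace (3/4) with (1 - 1/4) by field. rewrite <- (RI_indO (1/4) 1) by lra.
    apply E_ge; auto. apply PC_indO. intros t Ht. unfold indO.
    destruct (Rlt_dec (1/4) t); [destruct (Rlt_dec t 1)|]; try (apply share_nonneg).
    rewrite share_dev1; auto; [lra|].
    intros m Hm Hmi. pose proof (Hv m Hm) as Hvm. unfold q.
    destruct (x m) as [|jm sm] eqn:Em; dcase; simpl in Hvm; try (exfalso; apply Hno; exists m; split; [auto|exists sm; auto]; fail); rabs; lra. }
  lra.
Qed.

Lemma filter_length_mono : forall {A} (f g : A -> bool) l, (forall a, f a = true -> g a = true) ->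
  (length (filter f l) <= length (filter g l))%nat.
Proof. intros A f g l H; induction l; simpl; auto.
  destruct (f a) eqn:Ef. rewrite (H a Ef). simpl; lia. destruct (g a); simpl; lia. Qed.

Lemma part_d : forall k n x, (3 <= k)%nat -> is_NE k n x -> (exists i0, (i0 < n)%nat /\ x i0 = Center) ->
  (exists i, (i < n)%nat /\ x i <> Center) ->
   forall j, (1 <= j <= k)%nat ->
     (2 <= card_edge n x j)%nat /\
     exists t, (2 <= card_at n x (OnEdge j t))%nat /\
       forall i s, (i < n)%nat -> x i = OnEdge j s -> s <= t.
Proof.
  intros k n x Hk HNE [i0 [Hi0 Ex0]] Hex j Hj.
  destruct (outermost n x j) as [i [s [Hi [Exi Hmax]]]].
  { apply (edge_nonempty k n x i0 j); auto. }
  pose proof (outer_pair k n x i j s i0 HNE Hi Exi Hi0 Ex0 Hmax) as Hc2. rewrite Exi in Hc2.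
  split.
  - eapply Nat.le_trans. exact Hc2. unfold card_at, card_edge. apply filter_length_mono.
    intros m Hm. apply point_eqb_iff in Hm. rewrite Hm. simpl. try apply Nat.eqb_refl.
  - exists s. split; [auto|]. intros i' s' Hi' E'. eapply Hmax; eauto.
Qed.

Lemma E_ge_lin' : forall n x x' i j a h c, (i < n)%nat -> PC h -> RInt h 0 1 = c ->
  (forall t, 0 < t < 1 -> a * share n x i (OnEdge j t) + h t <= share n x' i (OnEdge j t)) ->
  E n x' i j >= a * E n x i j + c.
Proof. intros. rewrite <- H1. apply E_ge_lin; auto. Qed.

Lemma sumL_gen : forall k c1 A B C a1 a2 a3, (1 <= a1 <= k)%nat -> (1 <= a2 <= k)%nat -> (1 <= a3 <= k)%nat ->
  sumL (fun j => c1 + A * (if Nat.eqb j a1 then 1 else 0) + B * (if Nat.eqb j a2 then 1 else 0)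
                   + C * (if Nat.eqb j a3 then 1 else 0)) (seq 1 k) = INR k * c1 + A + B + C.
Proof.
  intros. rewrite !sumL_add. rewrite sumL_const, length_seq.
  rewrite (sumL_ext (fun j => A * (if Nat.eqb j a1 then 1 else 0)) (fun j => if Nat.eqb j a1 then A else 0)),
    (sumL_ext (fun j => B * (if Nat.eqb j a2 then 1 else 0)) (fun j => if Nat.eqb j a2 then B else 0)),
    (sumL_ext (fun j => C * (if Nat.eqb j a3 then 1 else 0)) (fun j => if Nat.eqb j a3 then C else 0)).
  rewrite !sumL_ind1 by auto. lra.
  all: intros j _; destruct (Nat.eqb j _); lra.
Qed.

Lemma share_ge_dev : forall n x i q y, (i < n)%nat -> (0 < share n x i y -> dist y q < dist y (x i)) ->
  share n x i y <= share n (update x i q) i y.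
Proof. intros. apply share_ge_if; auto. intros. apply share_dev; auto. Qed.

Lemma ind_pos : forall k n x m, (forall m, (m < n)%nat -> valid k (x m)) -> (m < n)%nat ->
  forall j s, x m = OnEdge j s -> (1 <= j <= k)%nat /\ 0 < s <= 1.
Proof. intros. pose proof (H m H0). rewrite H1 in H2. exact H2. Qed.

Lemma cdev_other : forall k n x i j0 b j, (i < n)%nat -> (forall m, (m < n)%nat -> valid k (x m)) ->
  (forall m, (m < n)%nat -> x m <> Center) -> x i = OnEdge j0 b ->
  (forall m, (m < n)%nat -> b <= par (x m)) -> j <> j0 ->
  (exists m, (m < n)%nat /\ exists s, x m = OnEdge j s) ->
  E n (update x i Center) i j >= INR (card_at n x (x i)) * E n x i j + b / 2.
Proof.
  intros k n x i j0 b j Hi Hv NC Exi Hb Hj Hne.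
  destruct (ex_min (fun m => exists s, x m = OnEdge j s) (fun m => par (x m)) n Hne) as [h [Hh [[a Ea] Hmin]]].
  pose proof (Hb h Hh) as Hba. rewrite Ea in Hba. simpl in Hba.
  pose proof (Hv h Hh) as Hvh. rewrite Ea in Hvh. simpl in Hvh.
  pose proof (Hv i Hi) as Hvi. rewrite Exi in Hvi. simpl in Hvi.
  apply (E_ge_lin' _ _ _ _ _ _ (indO ((a - b)/2) (a/2))); auto. apply PC_indO.
  rewrite RI_indO by lra. lra.
  intros t Ht. unfold indO. destruct (Rlt_dec ((a-b)/2) t); [destruct (Rlt_dec t (a/2))|].
  - rewrite (share_zero n x i _ h); auto. rewrite share_dev1; auto. lra.
    + intros m Hm Hmi. pose proof (Hv m Hm) as Hvm. pose proof (NC m Hm) as Hnc. pose proof (Hmin m Hm) as Hmm.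
      rewrite Ea in Hmm.
      destruct (x m) as [|jm sm] eqn:Em; [congruence|]. simpl in Hvm. dcase;
      try (specialize (Hmm (ex_intro _ sm eq_refl)); simpl in Hmm); rabs; lra.
    + rewrite Ea, Exi. dcase. rabs; lra.
  - rewrite Rplus_0_r. apply share_mul_dev; auto. rewrite Exi. dcase. lra.
  - rewrite Rplus_0_r. apply share_mul_dev; auto. rewrite Exi. dcase. lra.
Qed.

Ltac simpl_if := repeat match goal with
  | |- context [if true then ?a else ?b] => change (if true then a else b) with a
  | |- context [if false then ?a else ?b] => change (if false then a else b) with b end.

Lemma RI_const1 : RInt (fun _ : R => 1) 0 1 = 1.
Proof. apply RI_const. Qed.

Lemma a_A1_r1 : forall k n x i j0 b, (3 <= k)%nat -> is_NE k n x ->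
  (forall m, (m < n)%nat -> x m <> Center) -> (i < n)%nat -> x i = OnEdge j0 b ->
  (forall m, (m < n)%nat -> b <= par (x m)) ->
  (forall j, (1 <= j <= k)%nat -> exists m, (m < n)%nat /\ exists s, x m = OnEdge j s) ->
  card_at n x (x i) = 1%nat -> False.
Proof.
  intros k n x i j0 b Hk HNE NC Hi Exi Hb AllNE Hc1.
  pose proof (proj1 HNE) as Hv.
  pose proof (Hv i Hi) as Hvi. rewrite Exi in Hvi. simpl in Hvi.
  assert (Hsep : forall m, (m < n)%nat -> m <> i -> x m <> x i) by (intros; apply (card_one_sep n); auto).
  set (q := Center). assert (Hq : valid k q) by exact I.
  assert (HE : forall j, (1 <= j <= k)%nat -> E n (update x i q) i j >= 1 * E n x i j +
     (b/2 + (-b) * (if Nat.eqb j j0 then 1 else 0) + 0 * (if Nat.eqb j j0 then 1 else 0) + 0 * (if Nat.eqb j j0 then 1 else 0))).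
  { intros j Hj. destruct (Nat.eqb_spec j j0) as [->|Hne]; simpl_if.
    - replace (b / 2 + - b * 1 + 0 * 1 + 0 * 1) with (- (b/2)) by lra.
      destruct (classic (exists m, (m < n)%nat /\ (m <> i /\ exists s, x m = OnEdge j0 s))) as [Ex|Nex].
      + destruct (ex_min _ (fun m => par (x m)) n Ex) as [h [Hh [[Hhi [nx Enx]] Hmin]]].
        pose proof (Hb h Hh) as Hbn. rewrite Enx in Hbn. simpl in Hbn.
        pose proof (Hv h Hh) as Hvh. rewrite Enx in Hvh. simpl in Hvh.
        assert (nx <> b) by (intro; subst; apply (Hsep h Hh Hhi); rewrite Enx, Exi; auto).
        apply (E_ge_lin' _ _ _ _ _ _ (fun t => 1 * indO 0 (nx/2) t + (-1) * (fun _ => 1) t + 1 * indO ((b+nx)/2) 1 t)); auto.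
        apply PC_lin3; [apply PC_indO| apply PC_const| apply PC_indO].
        rewrite RI_lin3 by (apply PC_indO || apply PC_const). rewrite !RI_indO, RI_const1 by lra. lra.
        intros t Ht. pose proof (share_le1 n x i (OnEdge j0 t) Hi). pose proof (share_nonneg n x i (OnEdge j0 t)).
        pose proof (share_nonneg n (update x i q) i (OnEdge j0 t)).
        unfold indO. destruct (Rlt_dec 0 t); [|lra].
        destruct (Rlt_dec t (nx/2)).
        * rewrite share_dev1 with (q := q); auto.
          destruct (Rlt_dec ((b+nx)/2) t); [lra|]. lra.
          intros m Hm Hmi. pose proof (Hv m Hm) as Hvm. pose proof (NC m Hm) as Hnc. pose proof (Hmin m Hm) as Hmm.
          rewrite Enx in Hmm. unfold q.
          destruct (x m) as [|jm sm] eqn:Em; [congruence|]. simpl in Hvm. dcase;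
          try (specialize (Hmm (conj Hmi (ex_intro _ sm eq_refl))); simpl in Hmm); rabs; lra.
        * destruct (Rlt_dec ((b+nx)/2) t); [destruct (Rlt_dec t 1)|]; try lra.
          rewrite (share_zero n x i _ h); auto. lra. rewrite Enx, Exi. dcase. rabs; lra.
      + apply (E_ge_lin' _ _ _ _ _ _ (fun _ => - (b/2))); auto. apply PC_const. apply RI_const.
        intros t Ht. rewrite share_dev1 with (q := q); auto.
        pose proof (share_le1 n x i (OnEdge j0 t) Hi). lra.
        intros m Hm Hmi. pose proof (Hv m Hm) as Hvm. pose proof (NC m Hm) as Hnc. unfold q.
        destruct (x m) as [|jm sm] eqn:Em; [congruence|]. simpl in Hvm. dcase.
        * exfalso. apply Nex. exists m. split; auto. split; auto. exists sm; auto.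
        * lra.
    - replace (b / 2 + - b * 0 + 0 * 0 + 0 * 0) with (b/2) by lra.
      pose proof (cdev_other k n x i j0 b j Hi Hv NC Exi Hb Hne (AllNE j Hj)) as Hc.
      rewrite Hc1 in Hc. simpl in Hc. exact Hc. }
  pose proof (dev_gen k n x (update x i q) i 1 _ Hi HE) as Hd.
  rewrite sumL_gen in Hd by lia.
  pose proof (NE_dev k n x i q HNE Hi Hq).
  assert (3 <= INR k) by (assert (H3 := le_INR 3 k ltac:(lia)); simpl in H3; lra).
  nra.
Qed.

Lemma Out_nonneg : forall n x i j s, (i < n)%nat -> 0 <= RInt (pshare n x i j s) 0 1.
Proof. intros. rewrite <- (RI_const 0) at 1. apply RI_le. apply PC_const. apply PC_pshare; auto.
    intros t Ht. unfold pshare. pose proof (ind_le1 s 2 t). pose proof (share_nonneg n x i (OnEdge j t)). nra. Qed.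

Lemma Out_zero : forall n x i j s, 1 <= s -> RInt (pshare n x i j s) 0 1 = 0.
Proof. intros. transitivity (RInt (fun _ : R => 0) 0 1); [|apply RI_const]. apply RInt_ext.
  intros t Ht. rewrite Rmin_left in Ht by lra. rewrite Rmax_right in Ht by lra.
  unfold pshare, ind. destruct Rle_dec; [lra|]. lra. Qed.

Lemma outer_dev : forall k n x i j s eps, is_NE k n x -> (i < n)%nat -> x i = OnEdge j s -> (1 <= j <= k)%nat ->
  0 < s -> 0 < eps <= 1 - s ->
  payoff k n x i >= INR (card_at n x (x i)) * RInt (pshare n x i j s) 0 1 - eps.
Proof.
  intros k n x i j s eps HNE Hi Exi Hj Hs He.
  set (r := INR (card_at n x (x i))). set (Out := RInt (pshare n x i j s) 0 1).
  assert (Hrs : forall y, r * share n x i y <= 1) by (intros; apply share_card_mul; auto).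
  set (q := OnEdge j (s + eps)).
  assert (Hq : valid k q) by (simpl; split; [lia|lra]).
  pose proof (NE_dev k n x i q HNE Hi Hq) as Hdev.
  pose proof (payoff_ge_E k n (update x i q) i j Hi Hj).
  assert (r * Out - eps <= E n (update x i q) i j).
  { replace (r * Out - eps) with (RInt (fun t => r * pshare n x i j s t + (-1) * ind s (s + eps) t) 0 1).
    2: { rewrite RI_lin2 by (apply PC_pshare || apply PC_ind; auto). rewrite RI_ind by lra. unfold Out. lra. }
    apply E_ge; auto. apply PC_lin2; [apply PC_pshare; auto| apply PC_ind].
    intros t Ht. unfold pshare, ind. pose proof (Hrs (OnEdge j t)).
    pose proof (share_nonneg n x i (OnEdge j t)). pose proof (share_nonneg n (update x i q) i (OnEdge j t)).
    destruct (Rle_dec s t); [destruct (Rlt_dec t 2)|]; try destruct (Rlt_dec t (s + eps)); try lra.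
    assert (r * share n x i (OnEdge j t) <= share n (update x i q) i (OnEdge j t)).
    { apply share_mul_dev; auto. rewrite Exi; unfold q; simpl. rewrite Nat.eqb_refl.
      rewrite !Rabs_right by lra. lra. }
    lra. }
  lra.
Qed.

Lemma a_A1_r2 : forall k n x i j0 b, (3 <= k)%nat -> is_NE k n x ->
  (forall m, (m < n)%nat -> x m <> Center) -> (i < n)%nat -> x i = OnEdge j0 b ->
  (forall m, (m < n)%nat -> b <= par (x m)) ->
  (forall j, (1 <= j <= k)%nat -> exists m, (m < n)%nat /\ exists s, x m = OnEdge j s) ->
  (2 <= card_at n x (x i))%nat -> False.
Proof.
  intros k n x i j0 b Hk HNE NC Hi Exi Hb AllNE Hc2.
  pose proof (proj1 HNE) as Hv.
  pose proof (Hv i Hi) as Hvi. rewrite Exi in Hvi. simpl in Hvi.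
  set (r := INR (card_at n x (x i))).
  assert (Hr : 2 <= r) by (unfold r; assert (H2 := le_INR 2 _ Hc2); simpl in H2; lra).
  assert (Hrs : forall y, r * share n x i y <= 1) by (intros; apply share_card_mul; auto).
  set (Out := RInt (pshare n x i j0 b) 0 1).
  pose proof (Out_nonneg n x i j0 b Hi) as HO. fold Out in HO.
  pose proof (payoff_pos k n x i ltac:(lia) Hi Hv) as Hu.
  set (u := payoff k n x i) in *.
  set (q := Center). assert (Hq : valid k q) by exact I.
  assert (HE : forall j, (1 <= j <= k)%nat -> E n (update x i q) i j >= r * E n x i j +
     (b/2 + (- r * Out - b) * (if Nat.eqb j j0 then 1 else 0) + 0 * (if Nat.eqb j j0 then 1 else 0) + 0 * (if Nat.eqb j j0 then 1 else 0))).
  { intros j Hj. destruct (Nat.eqb_spec j j0) as [->|Hne]; simpl_if.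
    - replace (b / 2 + (- r * Out - b) * 1 + 0 * 1 + 0 * 1) with (- r * Out + 1 * (b/2 - 0) + (-1) * (b - 0)) by lra.
      apply (E_ge_lin' _ _ _ _ _ _ (fun t => (-r) * pshare n x i j0 b t + 1 * indO 0 (b/2) t + (-1) * ind 0 b t)); auto.
      apply PC_lin3; [apply PC_pshare; auto| apply PC_indO| apply PC_ind].
      rewrite RI_lin3 by (apply PC_pshare || apply PC_indO || apply PC_ind; auto).
      rewrite RI_indO, RI_ind by lra. fold Out. lra.
      intros t Ht. pose proof (Hrs (OnEdge j0 t)). pose proof (share_nonneg n x i (OnEdge j0 t)).
      pose proof (share_nonneg n (update x i q) i (OnEdge j0 t)).
      unfold pshare, indO, ind.
      destruct (Rle_dec b t); [destruct (Rlt_dec t 2)|]; try lra.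
      + destruct (Rlt_dec 0 t); [destruct (Rlt_dec t (b/2))|]; try lra.
        destruct (Rle_dec 0 t); [destruct (Rlt_dec t b)|]; lra.
      + destruct (Rle_dec 0 t); [destruct (Rlt_dec t b)|]; try lra.
        destruct (Rlt_dec 0 t); [destruct (Rlt_dec t (b/2))|]; try lra.
        rewrite share_dev1 with (q := q); auto. lra.
        intros m Hm Hmi. pose proof (Hv m Hm) as Hvm. pose proof (NC m Hm) as Hnc. pose proof (Hb m Hm) as Hbm.
        unfold q. destruct (x m) as [|jm sm] eqn:Em; [congruence|]. simpl in Hvm, Hbm. dcase; rabs; lra.
    - replace (b / 2 + (- r * Out - b) * 0 + 0 * 0 + 0 * 0) with (b/2) by lra.
      exact (cdev_other k n x i j0 b j Hi Hv NC Exi Hb Hne (AllNE j Hj)). }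
  pose proof (dev_gen k n x (update x i q) i r _ Hi HE) as Hd.
  rewrite sumL_gen in Hd by lia.
  pose proof (NE_dev k n x i q HNE Hi Hq) as Hd1. fold u in Hd, Hd1.
  assert (3 <= INR k) by (assert (H3 := le_INR 3 k ltac:(lia)); simpl in H3; lra).
  destruct (Rle_dec Out (u - Out)).
  - (* center deviation profitable *)
    assert (r * (u - Out) >= 2 * (u - Out)) by (apply Rle_ge, Rmult_le_compat_r; lra).
    assert (INR k * (b/2) >= 3 * (b/2)) by (apply Rle_ge, Rmult_le_compat_r; lra).
    nra.
  - destruct (Rlt_or_le b 1) as [Hb1|Hb1].
    + set (eps := Rmin (1 - b) ((2 * Out - u) / 2)).
      assert (eps <= 1 - b) by apply Rmin_l. assert (eps <= (2 * Out - u) / 2) by apply Rmin_r.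
      assert (0 < eps) by (apply Rmin_pos; lra).
      pose proof (outer_dev k n x i j0 b eps HNE Hi Exi ltac:(lia) ltac:(lra) ltac:(lra)) as Ho.
      fold r Out u in Ho. nra.
    + pose proof (Out_zero n x i j0 b Hb1). fold Out in H0. lra.
Qed.

Lemma a_A2_h : forall k n x i j0 b je h jh sh, (3 <= k)%nat -> is_NE k n x ->
  (forall m, (m < n)%nat -> x m <> Center) -> (i < n)%nat -> x i = OnEdge j0 b ->
  (forall m, (m < n)%nat -> b <= par (x m)) ->
  (1 <= je <= k)%nat -> (forall m s, (m < n)%nat -> x m <> OnEdge je s) ->
  (h < n)%nat -> x h = OnEdge jh sh -> b < sh -> False.
Proof.
  intros k n x i j0 b je h jh sh Hk HNE NC Hi Exi Hb Hje Hemp Hh Exh Hsh.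
  pose proof (proj1 HNE) as Hv.
  pose proof (Hv i Hi) as Hvi. rewrite Exi in Hvi. simpl in Hvi.
  pose proof (Hv h Hh) as Hvh. rewrite Exh in Hvh. simpl in Hvh.
  assert (Hj0e : j0 <> je) by (intro; subst; apply (Hemp i b Hi Exi)).
  assert (Hjhe : jh <> je) by (intro; subst; apply (Hemp h sh Hh Exh)).
  destruct (ex_eq (b/2)) as [d Hd].
  set (q := OnEdge je d). assert (Hq : valid k q) by (simpl; split; [lia|lra]).
  assert (Hgain : forall t, 0 < t < (b - d)/2 -> share n x h (OnEdge j0 t) = 0 /\ share n (update x h q) h (OnEdge j0 t) = 1).
  { intros t Ht. split.
    - apply (share_zero n x h _ i); auto. rewrite Exi, Exh. dcase; rabs; lra.
    - apply share_dev1; auto. intros m Hm Hmi. pose proof (Hv m Hm) as Hvm. pose proof (NC m Hm) as Hnc.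
      pose proof (Hb m Hm) as Hbm. pose proof (Hemp m) as Hem. unfold q.
      destruct (x m) as [|jm sm] eqn:Em; [congruence|]. simpl in Hvm, Hbm. dcase; try (exfalso; eapply Hem; eauto; fail); rabs; lra. }
  assert (Hje0 : forall t, 0 < t < 1 -> share n x h (OnEdge je t) = 0 /\ share n (update x h q) h (OnEdge je t) = 1).
  { intros t Ht. split.
    - apply (share_zero n x h _ i); auto. rewrite Exi, Exh. dcase; rabs; lra.
    - apply share_dev1; auto. intros m Hm Hmi. pose proof (Hv m Hm) as Hvm. pose proof (NC m Hm) as Hnc.
      pose proof (Hb m Hm) as Hbm. pose proof (Hemp m) as Hem. unfold q.
      destruct (x m) as [|jm sm] eqn:Em; [congruence|]. simpl in Hvm, Hbm. dcase; try (exfalso; eapply Hem; eauto; fail); rabs; lra. }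
  assert (Hoth : forall j t, j <> jh -> 0 < t < 1 -> share n x h (OnEdge j t) <= share n (update x h q) h (OnEdge j t)).
  { intros j t Hj Ht. apply share_ge_dev; auto. intros _. rewrite Exh. unfold q. dcase; rabs; lra. }
  assert (HE : forall j, (1 <= j <= k)%nat -> E n (update x h q) h j >= 1 * E n x h j +
     (0 + 1 * (if Nat.eqb j je then 1 else 0) + ((b - d)/2) * (if Nat.eqb j j0 then 1 else 0) + (-1) * (if Nat.eqb j jh then 1 else 0))).
  { intros j Hj.
    destruct (Nat.eq_dec j je) as [Eje|Nje];
    destruct (Nat.eq_dec j j0) as [Ej0|Nj0];
    destruct (Nat.eq_dec j jh) as [Ejh|Njh]; try congruence;
    rewrite ?(proj2 (Nat.eqb_eq _ _) Eje), ?(proj2 (Nat.eqb_neq _ _) Nje),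
      ?(proj2 (Nat.eqb_eq _ _) Ej0), ?(proj2 (Nat.eqb_neq _ _) Nj0),
      ?(proj2 (Nat.eqb_eq _ _) Ejh), ?(proj2 (Nat.eqb_neq _ _) Njh); simpl_if;
    try subst j; try subst jh.
    -
      apply (E_ge_lin' _ _ _ _ _ _ (fun _ => 1)); auto. apply PC_const. rewrite RI_const; lra.
      intros t Ht. destruct (Hje0 t Ht) as [-> ->]. lra.
    -
      apply (E_ge_lin' _ _ _ _ _ _ (fun t => 1 * indO 0 ((b-d)/2) t + (-1) * (fun _ => 1) t)); auto.
      apply PC_lin2; [apply PC_indO| apply PC_const]. rewrite RI_lin2 by (apply PC_indO || apply PC_const).
      rewrite RI_indO, RI_const1 by lra. lra.
      intros t Ht. pose proof (share_le1 n x h (OnEdge j0 t) Hh). pose proof (share_nonneg n x h (OnEdge j0 t)).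
      pose proof (share_nonneg n (update x h q) h (OnEdge j0 t)).
      unfold indO. destruct (Rlt_dec 0 t); [destruct (Rlt_dec t ((b-d)/2))|]; try lra.
      destruct (Hgain t ltac:(lra)) as [_ ->]. lra.
    -
      apply (E_ge_lin' _ _ _ _ _ _ (indO 0 ((b-d)/2))); auto. apply PC_indO. rewrite RI_indO by lra. lra.
      intros t Ht. unfold indO. destruct (Rlt_dec 0 t); [destruct (Rlt_dec t ((b-d)/2))|]; try lra.
      destruct (Hgain t ltac:(lra)) as [-> ->]. lra.
      rewrite Rmult_1_l, Rplus_0_r. apply Hoth; auto.
    -
      apply (E_ge_lin' _ _ _ _ _ _ (fun _ => -1)); auto. apply PC_const. rewrite RI_const; lra.
      intros t Ht. pose proof (share_le1 n x h (OnEdge jh t) Hh).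
      pose proof (share_nonneg n (update x h q) h (OnEdge jh t)). lra.
    -
      apply (E_ge_lin' _ _ _ _ _ _ (fun _ => 0)); auto. apply PC_const. rewrite RI_const; lra.
      intros t Ht. rewrite Rmult_1_l, Rplus_0_r. apply Hoth; auto. }
  pose proof (dev_gen k n x (update x h q) h 1 _ Hh HE) as Hd'.
  rewrite sumL_gen in Hd' by lia.
  pose proof (NE_dev k n x h q HNE Hh Hq). lra.
Qed.

Lemma a_A2_r1 : forall k n x i j0 b je, (3 <= k)%nat -> (2 <= n)%nat -> is_NE k n x ->
  (forall m, (m < n)%nat -> x m <> Center) -> (i < n)%nat -> x i = OnEdge j0 b ->
  (forall m, (m < n)%nat -> b <= par (x m)) -> (forall m, (m < n)%nat -> par (x m) <= b) ->
  (1 <= je <= k)%nat -> (forall m s, (m < n)%nat -> x m <> OnEdge je s) ->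
  card_at n x (x i) = 1%nat -> False.
Proof.
  intros k n x i j0 b je Hk Hn HNE NC Hi Exi Hb Hall Hje Hemp Hc1.
  pose proof (proj1 HNE) as Hv.
  pose proof (Hv i Hi) as Hvi. rewrite Exi in Hvi. simpl in Hvi.
  assert (Hsep : forall m, (m < n)%nat -> m <> i -> x m <> x i) by (intros; apply (card_one_sep n); auto).
  assert (Hj0e : j0 <> je) by (intro; subst; apply (Hemp i b Hi Exi)).
  set (m' := if Nat.eqb i 0 then 1%nat else 0%nat).
  assert (Hm' : (m' < n)%nat /\ m' <> i) by (unfold m'; destruct (Nat.eqb_spec i 0); lia).
  destruct Hm' as [Hm' Hm'i].
  pose proof (Hv m' Hm') as Hvm. pose proof (NC m' Hm') as Hncm. pose proof (Hb m' Hm') as Hbm. pose proof (Hall m' Hm') as Halm.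
  pose proof (Hsep m' Hm' Hm'i) as Hsm. pose proof (Hemp m') as Hem.
  destruct (x m') as [|j' s'] eqn:Em'; [congruence|]. simpl in Hvm, Hbm, Halm.
  assert (s' = b) by lra. subst s'.
  assert (Hj' : j' <> j0) by (intro; subst; rewrite Exi in Hsm; congruence).
  assert (Hj'e : j' <> je) by (intro; subst; eapply Hem; eauto).
  destruct (ex_eq (b/2)) as [d Hd].
  set (q := OnEdge je d). assert (Hq : valid k q) by (simpl; split; [lia|lra]).
  assert (Hoth : forall j t, j <> j0 -> 0 < t < 1 -> share n x i (OnEdge j t) <= share n (update x i q) i (OnEdge j t)).
  { intros j t Hj Ht. apply share_ge_dev; auto. intros _. rewrite Exi. unfold q. dcase; rabs; lra. }
  assert (Hj0 : forall t, 0 < t < 1 -> share n (update x i q) i (OnEdge j0 t) = 1).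
  { intros t Ht. apply share_dev1; auto. intros m Hm Hmi. pose proof (Hv m Hm) as Hvm2. pose proof (NC m Hm) as Hnc.
    pose proof (Hb m Hm) as Hbm2. pose proof (Hall m Hm) as Halm2. pose proof (Hsep m Hm Hmi) as Hs2. unfold q.
    destruct (x m) as [|jm sm] eqn:Em; [congruence|]. simpl in Hvm2, Hbm2, Halm2. rewrite Exi in Hs2.
    dcase; try (assert (sm = b) by lra; subst; congruence); rabs; lra. }
  assert (Hgain : forall t, 0 < t < (b - d)/2 -> share n x i (OnEdge j' t) = 0 /\ share n (update x i q) i (OnEdge j' t) = 1).
  { intros t Ht. split.
    - apply (share_zero n x i _ m'); auto. rewrite Exi, Em'. dcase; rabs; lra.
    - apply share_dev1; auto. intros m Hm Hmi. pose proof (Hv m Hm) as Hvm2. pose proof (NC m Hm) as Hnc.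
      pose proof (Hb m Hm) as Hbm2. pose proof (Hall m Hm) as Halm2. unfold q.
      destruct (x m) as [|jm sm] eqn:Em; [congruence|]. simpl in Hvm2, Hbm2, Halm2. dcase; rabs; lra. }
  assert (HE : forall j, (1 <= j <= k)%nat -> E n (update x i q) i j >= 1 * E n x i j +
     (0 + ((b - d)/2) * (if Nat.eqb j j' then 1 else 0) + 0 * (if Nat.eqb j j' then 1 else 0) + 0 * (if Nat.eqb j j' then 1 else 0))).
  { intros j Hj. destruct (Nat.eq_dec j j') as [Ej|Nj];
    rewrite ?(proj2 (Nat.eqb_eq _ _) Ej), ?(proj2 (Nat.eqb_neq _ _) Nj); simpl_if.
    - subst j. apply (E_ge_lin' _ _ _ _ _ _ (indO 0 ((b-d)/2))); auto. apply PC_indO. rewrite RI_indO by lra. lra.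
      intros t Ht. unfold indO. destruct (Rlt_dec 0 t); [destruct (Rlt_dec t ((b-d)/2))|]; try lra.
      destruct (Hgain t ltac:(lra)) as [-> ->]. lra.
      rewrite Rmult_1_l, Rplus_0_r. apply Hoth; auto.
    - apply (E_ge_lin' _ _ _ _ _ _ (fun _ => 0)); auto. apply PC_const. rewrite RI_const; lra.
      intros t Ht. rewrite Rmult_1_l, Rplus_0_r. destruct (Nat.eq_dec j j0).
      + subst j. rewrite Hj0 by auto. apply share_le1; auto.
      + apply Hoth; auto. }
  pose proof (dev_gen k n x (update x i q) i 1 _ Hi HE) as Hd'.
  rewrite sumL_gen in Hd' by lia.
  pose proof (NE_dev k n x i q HNE Hi Hq). lra.
Qed.

Lemma a_A2_r2 : forall k n x i j0 b je, (3 <= k)%nat -> is_NE k n x ->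
  (forall m, (m < n)%nat -> x m <> Center) -> (i < n)%nat -> x i = OnEdge j0 b ->
  (forall m, (m < n)%nat -> b <= par (x m)) -> (forall m, (m < n)%nat -> par (x m) <= b) ->
  (1 <= je <= k)%nat -> (forall m s, (m < n)%nat -> x m <> OnEdge je s) ->
  (2 <= card_at n x (x i))%nat -> False.
Proof.
  intros k n x i j0 b je Hk HNE NC Hi Exi Hb Hall Hje Hemp Hc2.
  pose proof (proj1 HNE) as Hv.
  pose proof (Hv i Hi) as Hvi. rewrite Exi in Hvi. simpl in Hvi.
  assert (Hj0e : j0 <> je) by (intro; subst; apply (Hemp i b Hi Exi)).
  assert (Hhalf : forall y, share n x i y <= 1/2).
  { intros y. eapply Rle_trans. apply share_le_card; auto. apply le_INR in Hc2. simpl in Hc2.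
    replace (1/2) with (/2) by field. apply Rinv_le_contravar; lra. }
  destruct (ex_eq (b/2)) as [d Hd].
  set (q := OnEdge je d). assert (Hq : valid k q) by (simpl; split; [lia|lra]).
  assert (Hoth : forall j t, j <> j0 -> 0 < t < 1 -> share n x i (OnEdge j t) <= share n (update x i q) i (OnEdge j t)).
  { intros j t Hj Ht. apply share_ge_dev; auto. intros _. rewrite Exi. unfold q. dcase; rabs; lra. }
  assert (Hje1 : forall t, 0 < t < 1 -> share n (update x i q) i (OnEdge je t) = 1).
  { intros t Ht. apply share_dev1; auto. intros m Hm Hmi. pose proof (Hv m Hm) as Hvm2. pose proof (NC m Hm) as Hnc.
    pose proof (Hb m Hm) as Hbm2. pose proof (Hemp m) as Hem. unfold q.
    destruct (x m) as [|jm sm] eqn:Em; [congruence|]. simpl in Hvm2, Hbm2.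
    dcase; try (exfalso; eapply Hem; eauto; fail); rabs; lra. }
  assert (Hgain : forall t, 0 < t < (b - d)/2 -> share n (update x i q) i (OnEdge j0 t) = 1).
  { intros t Ht. apply share_dev1; auto. intros m Hm Hmi. pose proof (Hv m Hm) as Hvm2. pose proof (NC m Hm) as Hnc.
    pose proof (Hb m Hm) as Hbm2. pose proof (Hall m Hm) as Halm2. unfold q.
    destruct (x m) as [|jm sm] eqn:Em; [congruence|]. simpl in Hvm2, Hbm2, Halm2. dcase; rabs; lra. }
  assert (HE : forall j, (1 <= j <= k)%nat -> E n (update x i q) i j >= 1 * E n x i j +
     (0 + (1/2) * (if Nat.eqb j je then 1 else 0) + ((b - d)/2) * (if Nat.eqb j j0 then 1 else 0) + (-1/2) * (if Nat.eqb j j0 then 1 else 0))).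
  { intros j Hj. destruct (Nat.eq_dec j je) as [Ej|Nj]; destruct (Nat.eq_dec j j0) as [Ej0|Nj0]; try congruence;
    rewrite ?(proj2 (Nat.eqb_eq _ _) Ej), ?(proj2 (Nat.eqb_neq _ _) Nj),
      ?(proj2 (Nat.eqb_eq _ _) Ej0), ?(proj2 (Nat.eqb_neq _ _) Nj0); simpl_if; try subst j.
    - apply (E_ge_lin' _ _ _ _ _ _ (fun _ => 1/2)); auto. apply PC_const. rewrite RI_const; lra.
      intros t Ht. rewrite Hje1 by auto. pose proof (Hhalf (OnEdge je t)). lra.
    - apply (E_ge_lin' _ _ _ _ _ _ (fun t => 1 * indO 0 ((b-d)/2) t + (-1/2) * (fun _ => 1) t)); auto.
      apply PC_lin2; [apply PC_indO| apply PC_const]. rewrite RI_lin2 by (apply PC_indO || apply PC_const).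
      rewrite RI_indO, RI_const1 by lra. lra.
      intros t Ht. pose proof (Hhalf (OnEdge j0 t)). pose proof (share_nonneg n x i (OnEdge j0 t)).
      pose proof (share_nonneg n (update x i q) i (OnEdge j0 t)).
      unfold indO. destruct (Rlt_dec 0 t); [destruct (Rlt_dec t ((b-d)/2))|]; try lra.
      rewrite Hgain by lra. lra.
    - apply (E_ge_lin' _ _ _ _ _ _ (fun _ => 0)); auto. apply PC_const. rewrite RI_const; lra.
      intros t Ht. rewrite Rmult_1_l, Rplus_0_r. apply Hoth; auto. }
  pose proof (dev_gen k n x (update x i q) i 1 _ Hi HE) as Hd'.
  rewrite sumL_gen in Hd' by lia.
  pose proof (NE_dev k n x i q HNE Hi Hq). lra.
Qed.

Lemma part_a : forall k n x, (3 <= k)%nat -> (2 <= n)%nat -> is_NE k n x ->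
  exists i, (i < n)%nat /\ x i = Center.
Proof.
  intros k n x Hk Hn HNE. apply NNPP. intro Hno.
  assert (NC : forall m, (m < n)%nat -> x m <> Center) by (intros m Hm E0; apply Hno; eauto).
  destruct (ex_min (fun _ => True) (fun m => par (x m)) n) as [i [Hi [_ Hmin]]]. { exists 0%nat; split; auto; lia. }
  destruct (x i) as [|j0 b] eqn:Exi. { exfalso; apply (NC i Hi Exi). }
  assert (Hb : forall m, (m < n)%nat -> b <= par (x m)).
  { intros m Hm. specialize (Hmin m Hm I). simpl in Hmin. exact Hmin. }
  pose proof (card_ge1 n x i Hi) as Hc.
  destruct (classic (forall j, (1 <= j <= k)%nat -> exists m, (m < n)%nat /\ exists s, x m = OnEdge j s)) as [AllNE|NAll].
  - destruct (Nat.eq_dec (card_at n x (x i)) 1).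
    + apply (a_A1_r1 k n x i j0 b); auto.
    + apply (a_A1_r2 k n x i j0 b); auto. lia.
  - apply not_all_ex_not in NAll as [je Hje]. apply imply_to_and in Hje as [Hje Hne].
    assert (Hemp : forall m s, (m < n)%nat -> x m <> OnEdge je s) by (intros m s Hm E0; apply Hne; eauto).
    destruct (classic (exists h, (h < n)%nat /\ b < par (x h))) as [[h [Hh Hbh]]|Nh].
    + destruct (x h) as [|jh sh] eqn:Exh. { exfalso; apply (NC h Hh Exh). }
      apply (a_A2_h k n x i j0 b je h jh sh); auto.
    + assert (Hall : forall m, (m < n)%nat -> par (x m) <= b).
      { intros m Hm. destruct (Rle_dec (par (x m)) b); auto. exfalso; apply Nh; exists m; split; auto; lra. }
      destruct (Nat.eq_dec (card_at n x (x i)) 1).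
      * apply (a_A2_r1 k n x i j0 b je); auto.
      * apply (a_A2_r2 k n x i j0 b je); auto. lia.
Qed.

Theorem mainTheorem20 (k n : nat) (x : profile)
  (hk : (3 <= k)%nat) (hn : (2 <= n)%nat) (hNE : is_NE k n x) :
  (* (a) *)
  (exists i, (i < n)%nat /\ x i = Center) /\
  (* (b) *)
  (forall p, valid k p -> p <> Center -> (card_at n x p <= 2)%nat) /\
  (* (c) *)
  (card_at n x Center <= k)%nat /\
  (* (d) *)
  ((exists i, (i < n)%nat /\ x i <> Center) ->
   forall j, (1 <= j <= k)%nat ->
     (2 <= card_edge n x j)%nat /\
     exists t, (2 <= card_at n x (OnEdge j t))%nat /\
       forall i s, (i < n)%nat -> x i = OnEdge j s -> s <= t).
Proof.
  split; [apply (part_a k n x); auto|].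
  split; [intros p Hp Hpc; apply (part_b k n x p); auto|].
  split; [apply (part_c k n x); auto|].
  intros Hex j Hj. apply (part_d k n x); auto. apply (part_a k n x); auto.
Qed.
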